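(* Let $\alpha>0$, let $(\theta_{1,N})$ be a real sequence and $\theta_{2,N}=\theta_{1,N}+\alpha/N$, and let $\eta_N(\theta)=\mathbf a(\theta)^*\boldsymbol\Pi_N\mathbf a(\theta)$. Then: (i) if $(\psi_N)$ is a sequence in $[-\pi,\pi]$ with $N\,\mathrm{dist}(\psi_N,\theta_{1,N})\to\infty$, then $\eta_N(\psi_N)\to1$; (ii) for every compact $\mathcal K\subset\mathbb R$, $\sup_{\beta\in\mathcal K}\big|\eta_N(\theta_{1,N}+\beta/N)-(1-\kappa(\beta))\big|\to0$, where $$\kappa(\beta)=\frac{\mathrm{sinc}(\beta c/2)^2+\mathrm{sinc}((\beta-\alpha)c/2)^2-2\,\mathrm{sinc}(\alpha c/2)\,\mathrm{sinc}(\beta c/2)\,\mathrm{sinc}((\beta-\alpha)c/2)}{1-\mathrm{sinc}(\alpha c/2)^2};$$ (iii) $\kappa(\beta)\le1$ for all $\beta\in\mathbb R$, with equality if and only if $\beta=0$ or $\beta=\alpha$.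
   Context: $c>0$; for each $N$, $M=M(N)\ge2$ with $M/N\to c$ as $N\to\infty$. Steering vector $\mathbf a(\theta)=M^{-1/2}(1,e^{\mathrm i\theta},\dots,e^{\mathrm i(M-1)\theta})^T$. $\boldsymbol\Pi_N$ is the orthogonal projection onto the orthogonal complement of $\mathrm{span}\{\mathbf a(\theta_{1,N}),\mathbf a(\theta_{2,N})\}$. $\mathrm{sinc}(x)=\sin(x)/x$ for $x\neq0$, $\mathrm{sinc}(0)=1$. $\mathrm{dist}(x,y)=\min_{j\in\mathbb Z}|x-y+2\pi j|$ is the distance modulo $2\pi$. *)

(* Defs.v *)
From Stdlib Require Import Reals Lra Rtopology.
Open Scope R_scope.

(* Complex numbers as pairs of reals (re, im). *)
Definition C := (R * R)%type.
Definition Cadd (u v : C) : C := (fst u + fst v, snd u + snd v).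
Definition Csub (u v : C) : C := (fst u - fst v, snd u - snd v).
Definition Cmul (u v : C) : C :=
  (fst u * fst v - snd u * snd v, fst u * snd v + snd u * fst v).
Definition Cconj (u : C) : C := (fst u, - snd u).
Definition C0 : C := (0, 0).

Fixpoint csum (f : nat -> C) (n : nat) : C :=
  match n with
  | O => C0
  | S n' => Cadd (csum f n') (f n')
  end.

(* vectors of C^M are functions nat -> C, only indices k < M matter *)
Definition cinner (M : nat) (u v : nat -> C) : C :=
  csum (fun k => Cmul (Cconj (u k)) (v k)) M.

(* steering vector a(theta) = M^{-1/2} (e^{i k theta})_{k=0..M-1} *)
Definition steer (M : nat) (theta : R) : nat -> C :=
  fun k => (cos (INR k * theta) / sqrt (INR M), sin (INR k * theta) / sqrt (INR M)).

(* p = Pi v, where Pi is the orthogonal projection onto the orthogonal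
   complement of span{u1,u2}: v - p lies in span{u1,u2} and p is orthogonal
   to u1 and u2. *)
Definition is_perp_proj (M : nat) (u1 u2 v p : nat -> C) : Prop :=
  (exists x y : C, forall k, (k < M)%nat ->
      p k = Csub (Csub (v k) (Cmul x (u1 k))) (Cmul y (u2 k)))
  /\ cinner M u1 p = C0 /\ cinner M u2 p = C0.

(* e = a(theta)^* Pi a(theta) (a real number, taken as its real part;
   the imaginary part is 0 since Pi is Hermitian). *)
Definition eta_rel (M : nat) (th1 th2 theta e : R) : Prop :=
  exists p, is_perp_proj M (steer M th1) (steer M th2) (steer M theta) p
            /\ e = fst (cinner M (steer M theta) p).

Definition sinc (x : R) : R := if Req_EM_T x 0 then 1 else sin x / x.

(* distance modulo 2 pi: min_j |x - y + 2 pi j| *)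
Definition dist2pi (x y : R) : R :=
  let t := x - y in
  let r := t - 2 * PI * IZR (Int_part (t / (2 * PI))) in
  Rmin r (2 * PI - r).

Definition kappa (c alpha beta : R) : R :=
  (sinc (beta * c / 2) ^ 2 + sinc ((beta - alpha) * c / 2) ^ 2
   - 2 * sinc (alpha * c / 2) * sinc (beta * c / 2) * sinc ((beta - alpha) * c / 2))
  / (1 - sinc (alpha * c / 2) ^ 2).

(* Main.v *)
Require Import Defs.
From Stdlib Require Import Reals Rtopology.
From Stdlib Require Import Lra Lia.
Open Scope R_scope.


Fixpoint rsum (f : nat -> R) (n : nat) : R :=
  match n with O => 0 | S n' => rsum f n' + f n' end.

Lemma rsum_ext f g n : (forall k, (k < n)%nat -> f k = g k) -> rsum f n = rsum g n.
Proof. induction n; simpl; intros H; [reflexivity|].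
rewrite IHn by (intros; apply H; lia). rewrite H by lia. reflexivity. Qed.

Lemma rsum_lin2 a b f g n :
  rsum (fun k => a * f k + b * g k) n = a * rsum f n + b * rsum g n.
Proof. induction n; simpl; [ring|]. rewrite IHn. ring. Qed.

Lemma rsum_scal a f n : rsum (fun k => a * f k) n = a * rsum f n.
Proof. induction n; simpl; [ring|]. rewrite IHn. ring. Qed.

Lemma rsum_plus f g n : rsum (fun k => f k + g k) n = rsum f n + rsum g n.
Proof. induction n; simpl; [ring|]. rewrite IHn. ring. Qed.

Lemma rsum_minus f g n : rsum (fun k => f k - g k) n = rsum f n - rsum g n.
Proof. induction n; simpl; [ring|]. rewrite IHn. ring. Qed.

Lemma rsum_const a n : rsum (fun _ => a) n = INR n * a.
Proof. induction n; simpl rsum; [simpl; ring|]. rewrite IHn, S_INR. ring. Qed.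

Lemma rsum_tele g n : rsum (fun k => g (S k) - g k) n = g n - g O.
Proof. induction n; simpl; [ring|]. rewrite IHn. ring. Qed.

Lemma rsum_shift f n : rsum f (S n) = f O + rsum (fun k => f (S k)) n.
Proof. induction n; simpl in *; [ring|]. rewrite IHn. ring. Qed.

Lemma rsum_rev f n : rsum f n = rsum (fun k => f (n - 1 - k)%nat) n.
Proof. revert f; induction n; intros f; [reflexivity|].
rewrite (rsum_shift (fun k => f (S n - 1 - k)%nat)). simpl rsum at 1. rewrite IHn.
replace (f (S n - 1 - 0)%nat) with (f n) by (f_equal; lia).
rewrite Rplus_comm. f_equal. apply rsum_ext. intros k Hk. f_equal. lia. Qed.

Lemma rsum_app f a b : rsum f (a + b) = rsum f a + rsum (fun k => f (a + k)%nat) b.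
Proof. induction b; simpl. rewrite Nat.add_0_r; ring.
rewrite Nat.add_succ_r. simpl. rewrite IHb. ring. Qed.

Lemma rsum_le f g n : (forall k, (k < n)%nat -> f k <= g k) -> rsum f n <= rsum g n.
Proof. induction n; simpl; intros H; [lra|].
pose proof (IHn (fun k Hk => H k ltac:(lia))). pose proof (H n ltac:(lia)). lra. Qed.

Lemma rsum_abs f n : Rabs (rsum f n) <= rsum (fun k => Rabs (f k)) n.
Proof. induction n; simpl. rewrite Rabs_R0; lra.
eapply Rle_trans; [apply Rabs_triang|]. lra. Qed.

Lemma rsum_abs_le f n b : (forall k, (k < n)%nat -> Rabs (f k) <= b) ->
  Rabs (rsum f n) <= INR n * b.
Proof. intros H. eapply Rle_trans; [apply rsum_abs|]. rewrite <- rsum_const.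
apply rsum_le. auto. Qed.

Lemma rsum_nonneg f n : (forall k, (k < n)%nat -> 0 <= f k) -> 0 <= rsum f n.
Proof. intros H. replace 0 with (rsum (fun _ => 0) n).
apply rsum_le; auto. rewrite rsum_const; ring. Qed.

Lemma csum_fst f n : fst (csum f n) = rsum (fun k => fst (f k)) n.
Proof. induction n; simpl; [reflexivity|]. rewrite IHn. reflexivity. Qed.
Lemma csum_snd f n : snd (csum f n) = rsum (fun k => snd (f k)) n.
Proof. induction n; simpl; [reflexivity|]. rewrite IHn. reflexivity. Qed.

Lemma csum_ext f g n : (forall k, (k < n)%nat -> f k = g k) -> csum f n = csum g n.
Proof. induction n; simpl; intros H; [reflexivity|].
rewrite IHn by (intros; apply H; lia). rewrite H by lia. reflexivity. Qed.

Lemma Ceq (u v : Defs.C) : fst u = fst v -> snd u = snd v -> u = v.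
Proof. destruct u, v; simpl; intros; subst; reflexivity. Qed.

Lemma cinner_fst M u v : fst (cinner M u v) =
  rsum (fun k => fst (u k) * fst (v k) + snd (u k) * snd (v k)) M.
Proof. unfold cinner. rewrite csum_fst. apply rsum_ext. intros. simpl. ring. Qed.
Lemma cinner_snd M u v : snd (cinner M u v) =
  rsum (fun k => fst (u k) * snd (v k) - snd (u k) * fst (v k)) M.
Proof. unfold cinner. rewrite csum_snd. apply rsum_ext. intros. simpl. ring. Qed.

Lemma cinner_lin M u v u1 u2 p x y :
  (forall k, (k < M)%nat -> p k = Csub (Csub (v k) (Cmul x (u1 k))) (Cmul y (u2 k))) ->
  cinner M u p = Csub (Csub (cinner M u v) (Cmul x (cinner M u u1))) (Cmul y (cinner M u u2)).
Proof. intros H. destruct x as [x1 x2], y as [y1 y2].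
apply Ceq; simpl; rewrite !cinner_fst, !cinner_snd.
- rewrite (rsum_ext _ (fun k => 1 * (fst (u k) * fst (v k) + snd (u k) * snd (v k))
     + (- x1) * (fst (u k) * fst (u1 k) + snd (u k) * snd (u1 k))
     + (x2) * (fst (u k) * snd (u1 k) - snd (u k) * fst (u1 k))
     + (- y1) * (fst (u k) * fst (u2 k) + snd (u k) * snd (u2 k))
     + (y2) * (fst (u k) * snd (u2 k) - snd (u k) * fst (u2 k)))).
  rewrite !rsum_plus, !rsum_scal, ?rsum_plus, ?rsum_minus. ring.
  intros k Hk. rewrite H by auto. simpl. ring.
- rewrite (rsum_ext _ (fun k => 1 * (fst (u k) * snd (v k) - snd (u k) * fst (v k))
     + (- x1) * (fst (u k) * snd (u1 k) - snd (u k) * fst (u1 k))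
     + (- x2) * (fst (u k) * fst (u1 k) + snd (u k) * snd (u1 k))
     + (- y1) * (fst (u k) * snd (u2 k) - snd (u k) * fst (u2 k))
     + (- y2) * (fst (u k) * fst (u2 k) + snd (u k) * snd (u2 k)))).
  rewrite !rsum_plus, !rsum_scal, ?rsum_plus, ?rsum_minus. ring.
  intros k Hk. rewrite H by auto. simpl. ring.
Qed.

Lemma cinner_conj M u v : cinner M u v = Cconj (cinner M v u).
Proof. apply Ceq; unfold Cconj; simpl; rewrite ?cinner_fst, ?cinner_snd.
- apply rsum_ext; intros; ring.
- replace (- rsum (fun k => fst (v k) * snd (u k) - snd (v k) * fst (u k)) M)
    with ((-1) * rsum (fun k => fst (v k) * snd (u k) - snd (v k) * fst (u k)) M) by ring.
  rewrite <- rsum_scal. apply rsum_ext; intros; ring. Qed.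


Definition phi (M : nat) (t : R) := (INR M - 1) * t / 2.
Definition Dk (M : nat) (t : R) :=
  rsum (fun k => cos (INR k * t - phi M t)) M / INR M.

Lemma sin_sum_zero M t : rsum (fun k => sin (INR k * t - phi M t)) M = 0.
Proof.
assert (H : rsum (fun k => sin (INR k * t - phi M t)) M =
            - rsum (fun k => sin (INR k * t - phi M t)) M).
{ rewrite rsum_rev at 1.
  replace (- rsum (fun k => sin (INR k * t - phi M t)) M) with
     ((-1) * rsum (fun k => sin (INR k * t - phi M t)) M) by ring.
  rewrite <- rsum_scal. apply rsum_ext. intros k Hk.
  rewrite minus_INR by lia. rewrite minus_INR by lia. simpl INR.
  replace ((INR M - 1 - INR k) * t - phi M t) with (- (INR k * t - phi M t))
    by (unfold phi; field). rewrite sin_neg. ring. }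
lra. Qed.

Lemma cos_sum M t : rsum (fun k => cos (INR k * t)) M = INR M * cos (phi M t) * Dk M t
  /\ rsum (fun k => sin (INR k * t)) M = INR M * sin (phi M t) * Dk M t.
Proof.
destruct (Nat.eq_dec M 0) as [->|HM].
{ simpl. split; ring. }
assert (HMr : INR M <> 0) by (apply not_0_INR; auto).
unfold Dk. split.
- rewrite (rsum_ext _ (fun k => cos (phi M t) * cos (INR k * t - phi M t)
      + (- sin (phi M t)) * sin (INR k * t - phi M t))).
  rewrite rsum_lin2, sin_sum_zero. field. auto.
  intros k _. replace (INR k * t) with ((INR k * t - phi M t) + phi M t) at 1 by ring.
  rewrite cos_plus. ring.
- rewrite (rsum_ext _ (fun k => sin (phi M t) * cos (INR k * t - phi M t)
      + (cos (phi M t)) * sin (INR k * t - phi M t))).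
  rewrite rsum_lin2, sin_sum_zero. field. auto.
  intros k _. replace (INR k * t) with ((INR k * t - phi M t) + phi M t) at 1 by ring.
  rewrite sin_plus. ring.
Qed.

Lemma steer_inner M x y : (1 <= M)%nat ->
  cinner M (steer M x) (steer M y) =
  (cos (phi M (y - x)) * Dk M (y - x), sin (phi M (y - x)) * Dk M (y - x)).
Proof.
intros HM. assert (HMr : 0 < INR M) by (apply lt_0_INR; lia).
assert (Hs : sqrt (INR M) * sqrt (INR M) = INR M) by (apply sqrt_sqrt; lra).
assert (Hs0 : sqrt (INR M) <> 0) by (intro H; rewrite H in Hs; lra).
destruct (cos_sum M (y - x)) as [H1 H2].
apply Ceq; [rewrite cinner_fst | rewrite cinner_snd]; simpl.
- rewrite (rsum_ext _ (fun k => / INR M * cos (INR k * (y - x)))).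
  rewrite rsum_scal, H1. field. lra.
  intros k _. unfold steer; simpl. rewrite Rmult_minus_distr_l, cos_minus.
  unfold Rdiv. replace (/ INR M) with (/ sqrt (INR M) * / sqrt (INR M)) by (rewrite <- Rinv_mult, Hs; reflexivity). ring.
- rewrite (rsum_ext _ (fun k => / INR M * sin (INR k * (y - x)))).
  rewrite rsum_scal, H2. field. lra.
  intros k _. unfold steer; simpl. rewrite Rmult_minus_distr_l, sin_minus.
  unfold Rdiv. replace (/ INR M) with (/ sqrt (INR M) * / sqrt (INR M)) by (rewrite <- Rinv_mult, Hs; reflexivity). ring.
Qed.

Lemma Dk_neg M t : Dk M (- t) = Dk M t.
Proof. unfold Dk. f_equal. apply rsum_ext. intros k _.
replace (INR k * - t - phi M (- t)) with (- (INR k * t - phi M t)) by (unfold phi; field).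
apply cos_neg. Qed.

Lemma Dk_0 M : (1 <= M)%nat -> Dk M 0 = 1.
Proof. intros HM. unfold Dk. rewrite (rsum_ext _ (fun _ => 1)).
rewrite rsum_const. field. apply not_0_INR; lia.
intros k _. replace (INR k * 0 - phi M 0) with 0 by (unfold phi; field). apply cos_0. Qed.

Lemma Dk_bound M t : (1 <= M)%nat -> Rabs (Dk M t) <= 1.
Proof. intros HM. assert (HMr : 0 < INR M) by (apply lt_0_INR; lia).
assert (H : Rabs (rsum (fun k => cos (INR k * t - phi M t)) M) <= INR M * 1).
{ apply rsum_abs_le. intros. apply Rabs_le, COS_bound. }
unfold Dk. unfold Rdiv. rewrite Rabs_mult, Rabs_inv, (Rabs_right (INR M)) by lra.
apply (Rmult_le_reg_r (INR M)); auto. rewrite Rmult_assoc, Rinv_l by lra. lra. Qed.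

Lemma Dk_closed M t : INR M * sin (t / 2) * Dk M t = sin (INR M * t / 2).
Proof.
destruct (Nat.eq_dec M 0) as [->|HM].
{ simpl. replace (0 * t / 2) with 0 by field. rewrite sin_0. ring. }
assert (HMr : INR M <> 0) by (apply not_0_INR; auto).
unfold Dk.
assert (H : rsum (fun k => 2 * sin (t / 2) * cos (INR k * t - phi M t)) M
   = 2 * sin (INR M * t / 2)).
{ set (g := fun j => sin (INR j * t - phi M t - t / 2)).
  rewrite (rsum_ext _ (fun k => g (S k) - g k)).
  rewrite rsum_tele. unfold g. simpl INR.
  replace (INR M * t - phi M t - t / 2) with (INR M * t / 2) by (unfold phi; field).
  replace (0 * t - phi M t - t / 2) with (- (INR M * t / 2)) by (unfold phi; field).
  rewrite sin_neg. ring.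
  intros k _. unfold g. rewrite S_INR.
  set (A := INR k * t - phi M t).
  replace ((INR k + 1) * t - phi M t - t / 2) with (A + t / 2) by (unfold A; field).
  replace (INR k * t - phi M t - t / 2) with (A - t / 2) by (unfold A; field).
  rewrite (sin_plus A), (sin_minus A). ring. }
rewrite rsum_scal in H. field_simplify; [|auto]. lra.
Qed.


Definition cone : Defs.C := (1, 0).

Lemma proj_alg (h1 h2 r x y : Defs.C) e :
  C0 = Csub (Csub h1 (Cmul x cone)) (Cmul y r) ->
  C0 = Csub (Csub h2 (Cmul x (Cconj r))) (Cmul y cone) ->
  e = fst (Csub (Csub cone (Cmul x (Cconj h1))) (Cmul y (Cconj h2))) ->
  (1 - (fst r ^ 2 + snd r ^ 2)) * (1 - e) =
   fst h1 ^ 2 + snd h1 ^ 2 + fst h2 ^ 2 + snd h2 ^ 2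
   - 2 * ((fst r * fst h2 - snd r * snd h2) * fst h1 + (fst r * snd h2 + snd r * fst h2) * snd h1).
Proof.
destruct h1 as [a1 b1], h2 as [a2 b2], r as [r1 r2], x as [x1 x2], y as [y1 y2].
unfold C0, Csub, Cmul, Cconj, cone; simpl. intros E1 E2 ->.
injection E1 as E1a E1b. injection E2 as E2a E2b.
assert (a1 = x1 + (y1 * r1 - y2 * r2)) by lra.
assert (b1 = x2 + (y1 * r2 + y2 * r1)) by lra.
assert (a2 = x1 * r1 + x2 * r2 + y1) by lra.
assert (b2 = x2 * r1 - x1 * r2 + y2) by lra.
subst a1 b1 a2 b2. ring.
Qed.

Lemma steer_self M x : (1 <= M)%nat -> cinner M (steer M x) (steer M x) = cone.
Proof. intros HM. rewrite steer_inner by auto. rewrite Rminus_diag.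
replace (phi M 0) with 0 by (unfold phi; field). rewrite cos_0, sin_0, Dk_0 by auto.
unfold cone. f_equal; ring. Qed.

Lemma phase_alg Ds D1 D2 cs ss c2 s2 e : ss ^ 2 + cs ^ 2 = 1 -> s2 ^ 2 + c2 ^ 2 = 1 ->
  (1 - ((cs * Ds) ^ 2 + (ss * Ds) ^ 2)) * (1 - e) =
   ((cs * c2 - ss * s2) * D1) ^ 2 + ((ss * c2 + cs * s2) * D1) ^ 2
   + (c2 * D2) ^ 2 + (s2 * D2) ^ 2
   - 2 * ((cs * Ds * (c2 * D2) - ss * Ds * (s2 * D2)) * ((cs * c2 - ss * s2) * D1)
         + (cs * Ds * (s2 * D2) + ss * Ds * (c2 * D2)) * ((ss * c2 + cs * s2) * D1)) ->
  (1 - Ds ^ 2) * (1 - e) = D1 ^ 2 + D2 ^ 2 - 2 * Ds * D1 * D2.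
Proof. intros H1 H2 Q.
replace ((cs * Ds) ^ 2 + (ss * Ds) ^ 2) with (Ds ^ 2 * (ss ^ 2 + cs ^ 2)) in Q by ring.
rewrite H1, Rmult_1_r in Q. rewrite Q.
replace (D1 ^ 2 + D2 ^ 2 - 2 * Ds * D1 * D2) with
  ((D1 ^ 2 - 2 * Ds * D1 * D2) * (ss ^ 2 + cs ^ 2) * (s2 ^ 2 + c2 ^ 2) + D2 ^ 2 * (s2 ^ 2 + c2 ^ 2))
  by (rewrite H1, H2; ring).
ring. Qed.

Lemma eta_formula M th1 th2 th e : (1 <= M)%nat -> eta_rel M th1 th2 th e ->
  (1 - Dk M (th2 - th1) ^ 2) * (1 - e) = Dk M (th - th1) ^ 2 + Dk M (th - th2) ^ 2
     - 2 * Dk M (th2 - th1) * Dk M (th - th1) * Dk M (th - th2).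
Proof.
intros HM [p [[[x [y Hp]] [H1 H2]] He]].
set (u1 := steer M th1) in *. set (u2 := steer M th2) in *. set (v := steer M th) in *.
pose proof (cinner_lin M u1 v u1 u2 p x y Hp) as L1.
pose proof (cinner_lin M u2 v u1 u2 p x y Hp) as L2.
pose proof (cinner_lin M v v u1 u2 p x y Hp) as L3.
rewrite H1 in L1. rewrite H2 in L2. apply (f_equal fst) in L3. rewrite <- He in L3.
unfold u1, u2, v in *.
rewrite (cinner_conj M (steer M th2) (steer M th1)) in L2.
rewrite (cinner_conj M (steer M th) (steer M th1)) in L3.
rewrite (cinner_conj M (steer M th) (steer M th2)) in L3.
rewrite !steer_self in L1, L2, L3 by auto.
pose proof (proj_alg _ _ _ _ _ _ L1 L2 L3) as Q.
rewrite !steer_inner in Q by auto. cbn [fst snd] in Q.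
replace (phi M (th - th1)) with (phi M (th2 - th1) + phi M (th - th2)) in Q by (unfold phi; field).
rewrite cos_plus, sin_plus in Q.
replace (Dk M (th - th2)) with (Dk M (th - th2)) in Q by reflexivity.
assert (SC : forall a, sin a ^ 2 + cos a ^ 2 = 1) by (intro a; rewrite <- (sin2_cos2 a); unfold Rsqr; ring).
refine (phase_alg _ _ _ _ _ _ _ _ _ _ Q); apply SC.
Qed.

Lemma CS_real (w1 w2 p1 p2 : nat -> R) n :
  0 < rsum (fun k => w1 k ^ 2 + w2 k ^ 2) n ->
  rsum (fun k => w1 k * p1 k + w2 k * p2 k) n ^ 2
  + rsum (fun k => w1 k * p2 k - w2 k * p1 k) n ^ 2
  <= rsum (fun k => w1 k ^ 2 + w2 k ^ 2) n * rsum (fun k => p1 k ^ 2 + p2 k ^ 2) n.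
Proof.
set (A := rsum (fun k => w1 k ^ 2 + w2 k ^ 2) n).
set (P := rsum (fun k => p1 k ^ 2 + p2 k ^ 2) n).
set (Br := rsum (fun k => w1 k * p1 k + w2 k * p2 k) n).
set (Bi := rsum (fun k => w1 k * p2 k - w2 k * p1 k) n).
intros HA.
assert (H0 : 0 <= rsum (fun k => (A * p1 k - Br * w1 k + Bi * w2 k) ^ 2
                               + (A * p2 k - Br * w2 k - Bi * w1 k) ^ 2) n).
{ apply rsum_nonneg. intros. apply Rplus_le_le_0_compat; apply pow2_ge_0. }
rewrite (rsum_ext _ (fun k => (A ^ 2 * (p1 k ^ 2 + p2 k ^ 2) + (Br ^ 2 + Bi ^ 2) * (w1 k ^ 2 + w2 k ^ 2))
   + ((- 2 * A * Br) * (w1 k * p1 k + w2 k * p2 k) + (- 2 * A * Bi) * (w1 k * p2 k - w2 k * p1 k)))) in H0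
  by (intros; ring).
rewrite rsum_plus, !rsum_lin2 in H0. fold A P Br Bi in H0.
assert (H1 : 0 <= A * (A * P - (Br ^ 2 + Bi ^ 2))) by nra.
assert (H2 : 0 <= A * P - (Br ^ 2 + Bi ^ 2)).
{ destruct (Rle_or_lt 0 (A * P - (Br ^ 2 + Bi ^ 2))); auto. nra. }
lra. Qed.

Lemma eta_test M th1 th2 th e w : eta_rel M th1 th2 th e ->
  cinner M w (steer M th1) = C0 -> cinner M w (steer M th2) = C0 ->
  0 < fst (cinner M w w) ->
  fst (cinner M w (steer M th)) ^ 2 + snd (cinner M w (steer M th)) ^ 2
  <= fst (cinner M w w) * e.
Proof.
intros [p [[[x [y Hp]] [H1 H2]] He]] W1 W2 HA.
pose proof (cinner_lin M w _ _ _ p x y Hp) as L. rewrite W1, W2 in L.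
assert (Lw : cinner M w p = cinner M w (steer M th)).
{ rewrite L. destruct (cinner M w (steer M th)), x, y. unfold Csub, Cmul, C0; simpl. f_equal; ring. }
pose proof (cinner_lin M p _ _ _ p x y Hp) as Lp.
rewrite (cinner_conj M p (steer M th1)), (cinner_conj M p (steer M th2)), H1, H2 in Lp.
assert (Ee : e = fst (cinner M p p)).
{ rewrite Lp, He, (cinner_conj M p (steer M th)). destruct (cinner M (steer M th) p), x, y.
  unfold Csub, Cmul, C0, Cconj; simpl. ring. }
rewrite <- Lw, Ee, !cinner_fst, cinner_snd.
rewrite !cinner_fst in HA.
replace (rsum (fun k => fst (w k) * fst (w k) + snd (w k) * snd (w k)) M) with
  (rsum (fun k => fst (w k) ^ 2 + snd (w k) ^ 2) M) in * by (apply rsum_ext; intros; ring).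
replace (rsum (fun k => fst (p k) * fst (p k) + snd (p k) * snd (p k)) M) with
  (rsum (fun k => fst (p k) ^ 2 + snd (p k) ^ 2) M) by (apply rsum_ext; intros; ring).
apply (CS_real (fun k => fst (w k)) (fun k => snd (w k)) (fun k => fst (p k)) (fun k => snd (p k)) M HA).
Qed.

Lemma eta_nonneg M th1 th2 th e : eta_rel M th1 th2 th e -> 0 <= e.
Proof.
intros [p [[[x [y Hp]] [H1 H2]] He]].
pose proof (cinner_lin M p _ _ _ p x y Hp) as Lp.
rewrite (cinner_conj M p (steer M th1)), (cinner_conj M p (steer M th2)), H1, H2 in Lp.
assert (Ee : e = fst (cinner M p p)).
{ rewrite Lp, He, (cinner_conj M p (steer M th)). destruct (cinner M (steer M th) p), x, y.
  unfold Csub, Cmul, C0, Cconj; simpl. ring. }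
rewrite Ee, cinner_fst. apply rsum_nonneg. intros. nra. Qed.


Lemma Rabs_le_inv a b : Rabs a <= b -> - b <= a <= b.
Proof. unfold Rabs; destruct (Rcase_abs a); intros; lra. Qed.

Lemma sin_lb3 x : 0 <= x -> x <= 4 -> x - x^3/6 <= sin x.
Proof. intros. destruct (pre_sin_bound x 0 H H0) as [H1 _].
unfold sin_approx, sin_term in H1. simpl in H1. lra. Qed.

Lemma sin_le_x x : 0 <= x -> sin x <= x.
Proof. intros [H|H]. left; apply sin_lt_x; auto. subst; rewrite sin_0; lra. Qed.

Lemma abs_sin_le x : Rabs (sin x) <= Rabs x.
Proof.
pose proof (SIN_bound x).
destruct (Rle_or_lt 1 (Rabs x)) as [H1|H1]. apply Rabs_le in H; lra.
apply Rabs_def2 in H1. destruct H1.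
destruct (Rle_or_lt 0 x) as [H2|H2].
- rewrite (Rabs_right x) by lra. pose proof (sin_lb3 x H2 ltac:(lra)). pose proof (sin_le_x x H2).
  apply Rabs_le. assert (x^3 <= x) by nra. lra.
- rewrite (Rabs_left x) by lra. pose proof (sin_lb3 (-x) ltac:(lra) ltac:(lra)).
  pose proof (sin_le_x (-x) ltac:(lra)). rewrite sin_neg in *.
  apply Rabs_le. assert ((-x)^3 <= -x) by nra. lra.
Qed.

Lemma sin_close x : Rabs x <= 4 -> Rabs (x - sin x) <= Rabs x ^ 3 / 6.
Proof.
intros Hx. destruct (Rle_or_lt 0 x) as [H|H].
- rewrite (Rabs_right x) in * by lra. pose proof (sin_lb3 x H). pose proof (sin_le_x x H).
  apply Rabs_le. split; lra.
- rewrite (Rabs_left x) in * by lra. pose proof (sin_lb3 (-x) ltac:(lra) Hx).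
  pose proof (sin_le_x (-x) ltac:(lra)). rewrite sin_neg in *.
  apply Rabs_le. split; lra.
Qed.

Lemma cos_lip a b : Rabs (cos a - cos b) <= Rabs (a - b).
Proof. rewrite form2. rewrite !Rabs_mult.
pose proof (abs_sin_le ((a - b) / 2)). pose proof (SIN_bound ((a + b) / 2)).
assert (Rabs (sin ((a + b) / 2)) <= 1) by (apply Rabs_le; lra).
replace (Rabs ((a - b) / 2)) with (Rabs (a - b) / 2) in H
  by (unfold Rdiv; rewrite Rabs_mult, (Rabs_right (/2)) by lra; reflexivity).
assert (E2 : Rabs (-2) = 2) by (rewrite Rabs_left; lra). rewrite E2.
pose proof (Rabs_pos (sin ((a - b) / 2))). pose proof (Rabs_pos (sin ((a + b) / 2))).
nra. Qed.

Lemma sin_lip a b : Rabs (sin a - sin b) <= Rabs (a - b).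
Proof. rewrite form4. rewrite !Rabs_mult.
pose proof (abs_sin_le ((a - b) / 2)). pose proof (COS_bound ((a + b) / 2)).
assert (Rabs (cos ((a + b) / 2)) <= 1) by (apply Rabs_le; lra).
replace (Rabs ((a - b) / 2)) with (Rabs (a - b) / 2) in H
  by (unfold Rdiv; rewrite Rabs_mult, (Rabs_right (/2)) by lra; reflexivity).
rewrite (Rabs_right 2) by lra.
pose proof (Rabs_pos (sin ((a - b) / 2))). pose proof (Rabs_pos (cos ((a + b) / 2))).
nra. Qed.

Lemma sinc_nz x : x <> 0 -> sinc x = sin x / x.
Proof. intros H. unfold sinc. destruct (Req_EM_T x 0); [contradiction|reflexivity]. Qed.
Lemma sinc_0 : sinc 0 = 1.
Proof. unfold sinc. destruct (Req_EM_T 0 0); [reflexivity|contradiction]. Qed.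

Lemma sinc_bound x : Rabs (sinc x) <= 1.
Proof. destruct (Req_EM_T x 0) as [->|H]. rewrite sinc_0, Rabs_R1; lra.
rewrite sinc_nz by auto. unfold Rdiv. rewrite Rabs_mult, Rabs_inv.
pose proof (abs_sin_le x). assert (0 < Rabs x) by (apply Rabs_pos_lt; auto).
apply (Rmult_le_reg_r (Rabs x)); auto. rewrite Rmult_assoc, Rinv_l by lra. lra. Qed.

Lemma sinc_lt1 x : x <> 0 -> Rabs (sinc x) < 1.
Proof. intros H. rewrite sinc_nz by auto. unfold Rdiv. rewrite Rabs_mult, Rabs_inv.
assert (0 < Rabs x) by (apply Rabs_pos_lt; auto).
assert (Rabs (sin x) < Rabs x).
{ pose proof (SIN_bound x) as SB.
  destruct (Rle_or_lt (Rabs x) 1) as [Hx|Hx]; [|apply Rabs_le in SB; lra].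
  apply Rabs_le_inv in Hx. destruct (Rle_or_lt 0 x) as [Hp|Hn].
  - assert (Hp' : 0 < x) by lra. pose proof (sin_lt_x x Hp') as A. rewrite (Rabs_right x) by lra.
    pose proof (sin_lb3 x ltac:(lra) ltac:(lra)) as B. assert (x^3 <= x) by nra.
    apply Rabs_def1; lra.
  - assert (Hn' : 0 < -x) by lra. pose proof (sin_lt_x (-x) Hn') as A. rewrite sin_neg in A.
    rewrite (Rabs_left x) by lra.
    pose proof (sin_lb3 (-x) ltac:(lra) ltac:(lra)) as B. rewrite sin_neg in B.
    assert ((-x)^3 <= -x) by nra. apply Rabs_def1; lra. }
apply (Rmult_lt_reg_r (Rabs x)); auto. rewrite Rmult_assoc, Rinv_l by lra. lra. Qed.

Lemma sinc_even x : sinc (- x) = sinc x.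
Proof. destruct (Req_EM_T x 0) as [->|H]. rewrite Ropp_0; reflexivity.
rewrite !sinc_nz by lra. rewrite sin_neg. field. auto. Qed.

Lemma Dk_sinc M t : (1 <= M)%nat -> Rabs (t / 2) <= 1 ->
  Rabs (Dk M t - sinc (INR M * t / 2)) <= (t / 2) ^ 2 / 6.
Proof.
intros HM Ht. assert (HMr : 0 < INR M) by (apply lt_0_INR; lia).
destruct (Req_EM_T t 0) as [->|Hz].
{ replace (INR M * 0 / 2) with 0 by field. rewrite sinc_0, Dk_0 by auto.
  replace (1 - 1) with 0 by ring. rewrite Rabs_R0. replace ((0/2)^2/6) with 0 by field. lra. }
set (u := t / 2) in *. assert (Hu : u <> 0) by (unfold u; lra).
pose proof (Dk_closed M t) as HC.
rewrite sinc_nz by (intro H; apply Rmult_integral in H; unfold u in *; nra).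
replace (INR M * t / 2) with (INR M * u) by (unfold u; field).
replace (INR M * t / 2) with (INR M * u) in HC by (unfold u; field). fold u in HC.
rewrite <- HC.
replace (Dk M t - INR M * sin u * Dk M t / (INR M * u)) with (Dk M t * ((u - sin u) / u))
  by (field; split; lra).
rewrite Rabs_mult. pose proof (Dk_bound M t HM).
unfold Rdiv at 1. rewrite Rabs_mult, Rabs_inv.
pose proof (sin_close u ltac:(lra)).
assert (0 < Rabs u) by (apply Rabs_pos_lt; auto).
assert (Rabs (u - sin u) * / Rabs u <= u ^ 2 / 6).
{ apply (Rmult_le_reg_r (Rabs u)); auto. rewrite Rmult_assoc, Rinv_l by lra.
  replace (u ^ 2 / 6 * Rabs u) with (Rabs u ^ 3 / 6). lra.
  replace (u ^ 2) with (Rabs u ^ 2) by (unfold Rabs; destruct (Rcase_abs u); ring). field. }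
pose proof (Rabs_pos (Dk M t)). pose proof (Rabs_pos (u - sin u)).
assert (0 <= Rabs (u - sin u) * / Rabs u) by (apply Rmult_le_pos; auto; left; apply Rinv_0_lt_compat; auto).
nra.
Qed.


Lemma Dk_lip n u v : (1 <= n)%nat ->
  Rabs (Dk n (2 * u / INR n) - Dk n (2 * v / INR n)) <= Rabs (u - v).
Proof.
intros Hn. assert (Hr : 0 < INR n) by (apply lt_0_INR; lia).
unfold Dk. replace (rsum (fun k => cos (INR k * (2 * u / INR n) - phi n (2 * u / INR n))) n / INR n -
  rsum (fun k => cos (INR k * (2 * v / INR n) - phi n (2 * v / INR n))) n / INR n) with
  (rsum (fun k => cos (INR k * (2 * u / INR n) - phi n (2 * u / INR n))
               - cos (INR k * (2 * v / INR n) - phi n (2 * v / INR n))) n / INR n)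
  by (rewrite rsum_minus; field; lra).
assert (H : Rabs (rsum (fun k => cos (INR k * (2 * u / INR n) - phi n (2 * u / INR n))
               - cos (INR k * (2 * v / INR n) - phi n (2 * v / INR n))) n) <= INR n * Rabs (u - v)).
{ apply rsum_abs_le. intros k Hk. eapply Rle_trans; [apply cos_lip|].
  assert (Hk1 : INR k + 1 <= INR n) by (rewrite <- S_INR; apply le_INR; lia).
  pose proof (pos_INR k).
  replace (INR k * (2 * u / INR n) - phi n (2 * u / INR n) -
     (INR k * (2 * v / INR n) - phi n (2 * v / INR n))) with
     ((2 * INR k - INR n + 1) / INR n * (u - v)) by (unfold phi; field; lra).
  rewrite Rabs_mult. rewrite <- (Rmult_1_l (Rabs (u - v))) at 2.
  apply Rmult_le_compat_r; [apply Rabs_pos|].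
  unfold Rdiv. rewrite Rabs_mult, Rabs_inv, (Rabs_right (INR n)) by lra.
  apply (Rmult_le_reg_r (INR n)); auto. rewrite Rmult_assoc, Rinv_l by lra.
  rewrite Rmult_1_r, Rmult_1_l. apply Rabs_le. lra. }
unfold Rdiv. rewrite Rabs_mult, Rabs_inv, (Rabs_right (INR n)) by lra.
apply (Rmult_le_reg_r (INR n)); auto. rewrite Rmult_assoc, Rinv_l by lra. lra.
Qed.

Lemma sinc_approx n u : (1 <= n)%nat -> Rabs u <= INR n ->
  Rabs (Dk n (2 * u / INR n) - sinc u) <= (u / INR n) ^ 2 / 6.
Proof. intros Hn Hu. assert (Hr : 0 < INR n) by (apply lt_0_INR; lia).
pose proof (Dk_sinc n (2 * u / INR n) Hn) as H.
replace (INR n * (2 * u / INR n) / 2) with u in H by (field; lra).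
replace (2 * u / INR n / 2) with (u / INR n) in H by (field; lra).
apply H. unfold Rdiv. rewrite Rabs_mult, Rabs_inv, (Rabs_right (INR n)) by lra.
apply (Rmult_le_reg_r (INR n)); auto. rewrite Rmult_assoc, Rinv_l by lra. lra. Qed.

Lemma sinc_lip u v : Rabs (sinc u - sinc v) <= Rabs (u - v).
Proof.
destruct (Rle_or_lt (Rabs (sinc u - sinc v)) (Rabs (u - v))) as [H|H]; auto.
exfalso. set (d := Rabs (sinc u - sinc v) - Rabs (u - v)).
assert (Hd : 0 < d) by (unfold d; lra).
destruct (INR_unbounded ((u ^ 2 + v ^ 2) / (6 * d) + Rabs u + Rabs v + 1)) as [n Hn].
assert (H0 : 0 <= (u ^ 2 + v ^ 2) / (6 * d)).
{ apply Rmult_le_pos. nra. left; apply Rinv_0_lt_compat; lra. }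
pose proof (Rabs_pos u). pose proof (Rabs_pos v).
assert (Hn1 : (1 <= n)%nat). { destruct n. simpl in Hn. lra. lia. }
assert (Hr : 0 < INR n) by (apply lt_0_INR; lia).
pose proof (sinc_approx n u Hn1 ltac:(lra)) as A1.
pose proof (sinc_approx n v Hn1 ltac:(lra)) as A2.
pose proof (Dk_lip n u v Hn1) as A3.
assert (T : Rabs (sinc u - sinc v) <= (u / INR n) ^ 2 / 6 + (v / INR n) ^ 2 / 6 + Rabs (u - v)).
{ replace (sinc u - sinc v) with (- (Dk n (2 * u / INR n) - sinc u) + (Dk n (2 * v / INR n) - sinc v)
     + (Dk n (2 * u / INR n) - Dk n (2 * v / INR n))) by ring.
  eapply Rle_trans; [apply Rabs_triang|]. eapply Rle_trans; [apply Rplus_le_compat_r, Rabs_triang|].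
  rewrite Rabs_Ropp. lra. }
assert (T2 : (u / INR n) ^ 2 / 6 + (v / INR n) ^ 2 / 6 <= (u ^ 2 + v ^ 2) / (6 * INR n)).
{ assert (1 <= INR n) by (apply (le_INR 1); auto).
  replace ((u / INR n) ^ 2 / 6 + (v / INR n) ^ 2 / 6) with ((u ^ 2 + v ^ 2) / (6 * INR n) * / INR n)
    by (field; lra).
  assert (0 <= (u ^ 2 + v ^ 2) / (6 * INR n)).
  { apply Rmult_le_pos. nra. left; apply Rinv_0_lt_compat; lra. }
  rewrite <- (Rmult_1_r ((u ^ 2 + v ^ 2) / (6 * INR n))) at 2.
  apply Rmult_le_compat_l; auto. rewrite <- Rinv_1. apply Rinv_le_contravar; lra. }
assert (T3 : (u ^ 2 + v ^ 2) / (6 * INR n) < d).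
{ apply (Rmult_lt_reg_r (6 * INR n)). lra. unfold Rdiv. rewrite Rmult_assoc, Rinv_l by lra.
  assert ((u ^ 2 + v ^ 2) / (6 * d) < INR n) by lra.
  apply (Rmult_lt_reg_r (/ (6 * d))). apply Rinv_0_lt_compat; lra.
  replace (d * (6 * INR n) * / (6 * d)) with (INR n) by (field; lra). lra. }
unfold d in T3. lra.
Qed.


Lemma abs_prod_le x y X Y : Rabs x <= X -> Rabs y <= Y -> Rabs (x * y) <= X * Y.
Proof. intros. rewrite Rabs_mult. apply Rmult_le_compat; auto; apply Rabs_pos. Qed.

Lemma abs3 x y z : Rabs (x + y + z) <= Rabs x + Rabs y + Rabs z.
Proof. eapply Rle_trans; [apply Rabs_triang|].
pose proof (Rabs_triang x y). lra. Qed.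

Definition F (a b s : R) := (a ^ 2 + b ^ 2 - 2 * s * a * b) / (1 - s ^ 2).

Lemma FL a b s a' b' s' d m :
  Rabs a <= 1 -> Rabs b <= 1 -> Rabs s <= 1 -> Rabs a' <= 1 -> Rabs b' <= 1 -> Rabs s' <= 1 ->
  0 < m -> m <= 1 - s ^ 2 -> Rabs (a' - a) <= d -> Rabs (b' - b) <= d -> Rabs (s' - s) <= d ->
  d <= m / 4 ->
  0 < 1 - s' ^ 2 /\ Rabs (F a' b' s' - F a b s) <= 36 * d / m ^ 2.
Proof.
intros Ha Hb Hs Ha' Hb' Hs' Hm Hms Hda Hdb Hds Hdm.
assert (Hd0 : 0 <= d) by (pose proof (Rabs_pos (a' - a)); lra).
set (N := a ^ 2 + b ^ 2 - 2 * s * a * b). set (N' := a' ^ 2 + b' ^ 2 - 2 * s' * a' * b').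
set (D := 1 - s ^ 2). set (D' := 1 - s' ^ 2).
assert (HeD : Rabs (D' - D) <= 2 * d).
{ unfold D, D'. replace (1 - s' ^ 2 - (1 - s ^ 2)) with (- ((s' - s) * (s' + s))) by ring.
  rewrite Rabs_Ropp. replace (2 * d) with (d * 2) by ring. apply abs_prod_le; auto.
  eapply Rle_trans; [apply Rabs_triang|]. lra. }
assert (HeN : Rabs (N' - N) <= 10 * d).
{ unfold N, N'.
  replace (a' ^ 2 + b' ^ 2 - 2 * s' * a' * b' - (a ^ 2 + b ^ 2 - 2 * s * a * b)) with
    ((a' - a) * (a' + a) + (b' - b) * (b' + b) + (-2) * ((s' - s) * (a' * b') + (s * (a' - a)) * b' + (s * a) * (b' - b)))
    by ring.
  eapply Rle_trans; [apply abs3|].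
  assert (Rabs ((a' - a) * (a' + a)) <= d * 2).
  { apply abs_prod_le; auto. eapply Rle_trans; [apply Rabs_triang|]. lra. }
  assert (Rabs ((b' - b) * (b' + b)) <= d * 2).
  { apply abs_prod_le; auto. eapply Rle_trans; [apply Rabs_triang|]. lra. }
  assert (Rabs ((-2) * ((s' - s) * (a' * b') + (s * (a' - a)) * b' + (s * a) * (b' - b))) <= 2 * (3 * d)).
  { apply abs_prod_le. rewrite Rabs_left; lra.
    eapply Rle_trans; [apply abs3|].
    assert (Rabs ((s' - s) * (a' * b')) <= d * (1 * 1)) by (apply abs_prod_le; auto; apply abs_prod_le; auto).
    assert (Rabs ((s * (a' - a)) * b') <= (1 * d) * 1) by (apply abs_prod_le; auto; apply abs_prod_le; auto).
    assert (Rabs ((s * a) * (b' - b)) <= (1 * 1) * d) by (apply abs_prod_le; auto; apply abs_prod_le; auto).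
    lra. }
  lra. }
assert (HN : Rabs N <= 4).
{ unfold N. replace (a ^ 2 + b ^ 2 - 2 * s * a * b) with (a * a + b * b + (-2) * (s * a * b)) by ring.
  eapply Rle_trans; [apply abs3|].
  assert (Rabs (a * a) <= 1 * 1) by (apply abs_prod_le; auto).
  assert (Rabs (b * b) <= 1 * 1) by (apply abs_prod_le; auto).
  assert (Rabs ((-2) * (s * a * b)) <= 2 * (1 * 1 * 1)).
  { apply abs_prod_le. rewrite Rabs_left; lra. apply abs_prod_le; auto. apply abs_prod_le; auto. }
  lra. }
assert (HD : m <= D) by (unfold D; lra).
assert (HD1 : D <= 1) by (unfold D; pose proof (pow2_ge_0 s); lra).
assert (HD' : m / 2 <= D') by (apply Rabs_le_inv in HeD; lra).
split. lra.
unfold F. fold N N' D D'.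
replace (N' / D' - N / D) with (((N' - N) * D + N * (- (D' - D))) * / (D * D')) by (field; lra).
rewrite Rabs_mult, Rabs_inv, (Rabs_right (D * D')) by nra.
assert (Hnum : Rabs ((N' - N) * D + N * (- (D' - D))) <= 18 * d).
{ eapply Rle_trans; [apply Rabs_triang|].
  assert (Rabs ((N' - N) * D) <= (10 * d) * 1) by (apply abs_prod_le; auto; rewrite Rabs_right; lra).
  assert (Rabs (N * (- (D' - D))) <= 4 * (2 * d)) by (apply abs_prod_le; auto; rewrite Rabs_Ropp; auto).
  lra. }
assert (Hden : m * (m / 2) <= D * D') by (apply Rmult_le_compat; lra).
apply (Rmult_le_reg_r (D * D')). nra. rewrite Rmult_assoc, Rinv_l by nra. rewrite Rmult_1_r.
eapply Rle_trans; [exact Hnum|].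
replace (36 * d / m ^ 2 * (D * D')) with (18 * d * ((D * D') / (m * (m / 2)))) by (field; lra).
rewrite <- (Rmult_1_r (18 * d)) at 1. apply Rmult_le_compat_l. lra.
apply (Rmult_le_reg_r (m * (m / 2))). nra. unfold Rdiv. rewrite Rmult_assoc, Rinv_l by nra. lra.
Qed.

Section Seq.
Variables (c : R) (hc : 0 < c) (Mf : nat -> nat) (hM2 : forall N, (2 <= Mf N)%nat)
  (hMc : Un_cv (fun N => INR (Mf N) / INR N) c).

Lemma UL R eps : 0 <= R -> 0 < eps -> exists N0, forall N, (N0 <= N)%nat ->
  forall x, Rabs x <= R -> Rabs (Dk (Mf N) (x / INR N) - sinc (x * c / 2)) <= eps.
Proof.
intros HR He.
destruct (hMc (eps / (R + 1))) as [N1 HN1]. { apply Rdiv_lt_0_compat; lra. }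
destruct (INR_unbounded (R + R ^ 2 / (12 * eps) + 1)) as [N2 HN2].
assert (0 <= R ^ 2 / (12 * eps)) by (apply Rmult_le_pos; [nra| left; apply Rinv_0_lt_compat; lra]).
exists (max N1 N2). intros N HN x Hx.
assert (HN2' : INR N2 <= INR N) by (apply le_INR; lia).
assert (Hr : 1 <= INR N) by lra.
specialize (HN1 N ltac:(lia)). unfold Rdist in HN1.
assert (HM1 : (1 <= Mf N)%nat) by (specialize (hM2 N); lia).
assert (Hx2 : Rabs (x / INR N / 2) <= 1).
{ replace (x / INR N / 2) with (x * / (2 * INR N)) by (field; lra).
  rewrite Rabs_mult, (Rabs_right (/ (2 * INR N))) by (left; apply Rinv_0_lt_compat; lra).
  apply (Rmult_le_reg_r (2 * INR N)). lra. rewrite Rmult_assoc, Rinv_l by lra. lra. }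
pose proof (Dk_sinc (Mf N) (x / INR N) HM1 Hx2) as A1.
pose proof (sinc_lip (INR (Mf N) * (x / INR N) / 2) (x * c / 2)) as A2.
replace (INR (Mf N) * (x / INR N) / 2 - x * c / 2) with ((x / 2) * (INR (Mf N) / INR N - c))
  in A2 by (field; lra).
assert (A3 : Rabs ((x / 2) * (INR (Mf N) / INR N - c)) <= (R / 2) * (eps / (R + 1))).
{ apply abs_prod_le; [|lra]. unfold Rdiv. rewrite Rabs_mult, (Rabs_right (/2)) by lra. lra. }
assert (A4 : R / 2 * (eps / (R + 1)) <= eps / 2).
{ apply (Rmult_le_reg_r (2 * (R + 1))). lra.
  replace (R / 2 * (eps / (R + 1)) * (2 * (R + 1))) with (R * eps) by (field; lra).
  replace (eps / 2 * (2 * (R + 1))) with (R * eps + eps) by field. lra. }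
assert (A5 : (x / INR N / 2) ^ 2 / 6 <= eps / 2).
{ replace ((x / INR N / 2) ^ 2 / 6) with (x ^ 2 / (24 * INR N * INR N)) by (field; lra).
  assert (x ^ 2 <= R ^ 2). { apply Rabs_le_inv in Hx. nra. }
  apply (Rmult_le_reg_r (24 * INR N * INR N)). nra. unfold Rdiv at 1.
  rewrite Rmult_assoc, Rinv_l by nra.
  assert (R ^ 2 / (12 * eps) <= INR N) by lra.
  assert (R ^ 2 <= 12 * eps * INR N).
  { apply (Rmult_le_reg_r (/ (12 * eps))). apply Rinv_0_lt_compat; lra.
    replace (12 * eps * INR N * / (12 * eps)) with (INR N) by (field; lra). lra. }
  nra. }
replace (Dk (Mf N) (x / INR N) - sinc (x * c / 2)) with
  ((Dk (Mf N) (x / INR N) - sinc (INR (Mf N) * (x / INR N) / 2)) +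
   (sinc (INR (Mf N) * (x / INR N) / 2) - sinc (x * c / 2))) by ring.
eapply Rle_trans; [apply Rabs_triang|]. lra.
Qed.

End Seq.


Definition Copp (u : Defs.C) : Defs.C := (- fst u, - snd u).
Definition cexp (a : R) : Defs.C := (cos a, sin a).

Lemma C_ring_th : ring_theory C0 cone Cadd Cmul Csub Copp (@eq Defs.C).
Proof. constructor; intros; apply Ceq; destruct x; try destruct y; try destruct z;
  unfold Cadd, Cmul, Csub, Copp, C0, cone; simpl; ring. Qed.
Add Ring Cring : C_ring_th.

Lemma Cconj_mul a b : Cconj (Cmul a b) = Cmul (Cconj a) (Cconj b).
Proof. apply Ceq; destruct a, b; unfold Cconj, Cmul; simpl; ring. Qed.
Lemma Cconj_conj a : Cconj (Cconj a) = a.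
Proof. apply Ceq; destruct a; unfold Cconj; simpl; ring. Qed.
Lemma cexp_conj a : Cconj (cexp a) = cexp (- a).
Proof. apply Ceq; unfold Cconj, cexp; simpl; [rewrite cos_neg | rewrite sin_neg]; ring. Qed.
Lemma cexp_mul a b : Cmul (cexp a) (cexp b) = cexp (a + b).
Proof. apply Ceq; unfold Cmul, cexp; simpl; [rewrite cos_plus | rewrite sin_plus]; ring. Qed.
Lemma cexp_0 : cexp 0 = cone.
Proof. unfold cexp, cone. rewrite cos_0, sin_0. reflexivity. Qed.

Lemma csum_app f a b : csum f (a + b) = Cadd (csum f a) (csum (fun k => f (a + k)%nat) b).
Proof. induction b; simpl. rewrite Nat.add_0_r. unfold C0. apply Ceq; destruct (csum f a); simpl; ring.
rewrite Nat.add_succ_r. simpl. rewrite IHb. ring. Qed.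

Lemma csum_scal z f n : csum (fun k => Cmul z (f k)) n = Cmul z (csum f n).
Proof. induction n; simpl. apply Ceq; destruct z; unfold C0, Cmul; simpl; ring.
rewrite IHn. ring. Qed.

Lemma csum_zero f n : (forall k, (k < n)%nat -> f k = C0) -> csum f n = C0.
Proof. intros H. induction n; simpl; auto. rewrite IHn, H by (auto; lia). ring. Qed.

Definition sM (M : nat) : Defs.C := (/ sqrt (INR M), 0).
Lemma steer_cexp M phi0 j : steer M phi0 j = Cmul (sM M) (cexp (INR j * phi0)).
Proof. apply Ceq; unfold steer, sM, cexp, Cmul; simpl; unfold Rdiv; ring. Qed.

Definition Cn2 (u : Defs.C) := fst u ^ 2 + snd u ^ 2.
Lemma Cn2_mul u v : Cn2 (Cmul u v) = Cn2 u * Cn2 v.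
Proof. destruct u, v; unfold Cn2, Cmul; simpl; ring. Qed.

Section Test.
Variables (M m : nat) (th th1 th2 : R).
Definition z1 := cexp (INR m * (th1 - th)).
Definition z2 := cexp (INR m * (th2 - th)).
Definition g0 := Cmul z1 z2.
Definition g1 := Copp (Cadd z1 z2).
Definition g2 := cone.
Definition wv (j : nat) : Defs.C :=
  if (j <? m)%nat then Cmul (Cconj g0) (cexp (INR j * th))
  else if (j <? 2 * m)%nat then Cmul (Cconj g1) (cexp (INR j * th))
  else if (j <? 3 * m)%nat then Cmul (Cconj g2) (cexp (INR j * th))
  else C0.

Lemma block_term g l k phi0 :
  Cmul (Cconj (Cmul (Cconj g) (cexp (INR (l * m + k) * th)))) (steer M phi0 (l * m + k)%nat)
  = Cmul (Cmul (sM M) (Cmul g (cexp (INR l * INR m * (phi0 - th))))) (cexp (INR k * (phi0 - th))).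
Proof.
rewrite steer_cexp, Cconj_mul, Cconj_conj, cexp_conj.
transitivity (Cmul (Cmul (sM M) g) (Cmul (cexp (- (INR (l * m + k) * th))) (cexp (INR (l * m + k) * phi0)))).
ring. rewrite cexp_mul.
transitivity (Cmul (Cmul (sM M) g) (Cmul (cexp (INR l * INR m * (phi0 - th))) (cexp (INR k * (phi0 - th))))).
rewrite cexp_mul. f_equal. f_equal. rewrite plus_INR, mult_INR. ring.
ring. Qed.

Lemma wv_inner phi0 : (3 * m <= M)%nat ->
  cinner M wv (steer M phi0) =
  Cmul (sM M) (Cmul (Cadd (Cadd g0 (Cmul g1 (cexp (INR m * (phi0 - th)))))
                          (Cmul g2 (cexp (2 * INR m * (phi0 - th)))))
                    (csum (fun k => cexp (INR k * (phi0 - th))) m)).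
Proof.
intros H3. unfold cinner.
set (F := fun j => Cmul (Cconj (wv j)) (steer M phi0 j)).
replace (csum F M) with (csum F (m + (m + (m + (M - 3 * m))))) by (f_equal; lia).
rewrite !csum_app. cbv beta.
rewrite (csum_zero (fun k => F (m + (m + (m + k)))%nat)).
2:{ intros k Hk. unfold F, wv.
    replace ((m + (m + (m + k))) <? m)%nat with false by (symmetry; apply Nat.ltb_ge; lia).
    replace ((m + (m + (m + k))) <? 2 * m)%nat with false by (symmetry; apply Nat.ltb_ge; lia).
    replace ((m + (m + (m + k))) <? 3 * m)%nat with false by (symmetry; apply Nat.ltb_ge; lia).
    unfold Cconj, C0, Cmul; simpl. apply Ceq; simpl; ring. }
set (t := phi0 - th). set (S := csum (fun k => cexp (INR k * t)) m).
rewrite (csum_ext _ (fun k => Cmul (Cmul (sM M) (Cmul g0 (cexp (INR 0 * INR m * t)))) (cexp (INR k * t))) m).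
2:{ intros k Hk. unfold F, wv.
    replace (k <? m)%nat with true by (symmetry; apply Nat.ltb_lt; lia).
    pose proof (block_term g0 0 k phi0) as B. simpl (0 * m)%nat in B. simpl plus in B. exact B. }
rewrite (csum_ext (fun k => F (m + k)%nat) (fun k => Cmul (Cmul (sM M) (Cmul g1 (cexp (INR 1 * INR m * t)))) (cexp (INR k * t))) m).
2:{ intros k Hk. unfold F, wv.
    replace ((m + k) <? m)%nat with false by (symmetry; apply Nat.ltb_ge; lia).
    replace ((m + k) <? 2 * m)%nat with true by (symmetry; apply Nat.ltb_lt; lia).
    pose proof (block_term g1 1 k phi0) as B. replace (1 * m + k)%nat with (m + k)%nat in B by lia. exact B. }
rewrite (csum_ext (fun k => F (m + (m + k))%nat) (fun k => Cmul (Cmul (sM M) (Cmul g2 (cexp (INR 2 * INR m * t)))) (cexp (INR k * t))) m).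
2:{ intros k Hk. unfold F, wv.
    replace ((m + (m + k)) <? m)%nat with false by (symmetry; apply Nat.ltb_ge; lia).
    replace ((m + (m + k)) <? 2 * m)%nat with false by (symmetry; apply Nat.ltb_ge; lia).
    replace ((m + (m + k)) <? 3 * m)%nat with true by (symmetry; apply Nat.ltb_lt; lia).
    pose proof (block_term g2 2 k phi0) as B. replace (2 * m + k)%nat with (m + (m + k))%nat in B by lia. exact B. }
rewrite !csum_scal. fold S.
replace (INR 0 * INR m * t) with 0 by (simpl; ring). rewrite cexp_0.
replace (INR 1 * INR m * t) with (INR m * t) by (simpl; ring).
replace (INR 2 * INR m * t) with (2 * INR m * t) by (simpl; ring).
ring.
Qed.

End Test.

Lemma Cn2_cexp a : Cn2 (cexp a) = 1.
Proof. unfold Cn2, cexp; cbn [fst snd]. pose proof (sin2_cos2 a) as SC. unfold Rsqr in SC. nra. Qed.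
Lemma Cn2_conj g : Cn2 (Cconj g) = Cn2 g.
Proof. destruct g; unfold Cn2, Cconj; simpl. ring. Qed.

Lemma Cn2_opp u : Cn2 (Copp u) = Cn2 u.
Proof. destruct u; unfold Cn2, Copp; simpl; ring. Qed.

Lemma csum_cone n : csum (fun _ => cone) n = (INR n, 0).
Proof. induction n; simpl csum. reflexivity. rewrite IHn. unfold Cadd, cone; cbn [fst snd].
rewrite S_INR. f_equal; ring. Qed.

Section Test2.
Variables (M m : nat) (th th1 th2 : R).

Lemma wv_perp1 : (3 * m <= M)%nat -> cinner M (wv m th th1 th2) (steer M th1) = C0.
Proof. intros H. rewrite wv_inner by auto.
replace (2 * INR m * (th1 - th)) with (INR m * (th1 - th) + INR m * (th1 - th)) by ring.
rewrite <- cexp_mul. unfold g0, g1, g2. fold (z1 m th th1). ring. Qed.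

Lemma wv_perp2 : (3 * m <= M)%nat -> cinner M (wv m th th1 th2) (steer M th2) = C0.
Proof. intros H. rewrite wv_inner by auto.
replace (2 * INR m * (th2 - th)) with (INR m * (th2 - th) + INR m * (th2 - th)) by ring.
rewrite <- cexp_mul. unfold g0, g1, g2. fold (z2 m th th2). ring. Qed.

Lemma Cn2_one_minus a : Cn2 (Csub cone (cexp a)) = 2 - 2 * cos a.
Proof. unfold Cn2, Csub, cone, cexp; cbn [fst snd]. pose proof (sin2_cos2 a) as SC. unfold Rsqr in SC. nra. Qed.

Lemma wv_v : (1 <= M)%nat -> (3 * m <= M)%nat ->
  Cn2 (cinner M (wv m th th1 th2) (steer M th)) =
  INR m ^ 2 / INR M * (2 - 2 * cos (INR m * (th1 - th))) * (2 - 2 * cos (INR m * (th2 - th))).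
Proof. intros H1 H. rewrite wv_inner by auto. rewrite Rminus_diag.
rewrite (csum_ext _ (fun _ => cone)) by (intros; rewrite Rmult_0_r; apply cexp_0).
replace (INR m * 0) with 0 by ring. replace (2 * INR m * 0) with 0 by ring. rewrite cexp_0.
rewrite csum_cone.
replace (Cadd (Cadd (g0 m th th1 th2) (Cmul (g1 m th th1 th2) cone)) (Cmul g2 cone)) with
  (Cmul (Csub cone (z1 m th th1)) (Csub cone (z2 m th th2))) by (unfold g0, g1, g2; ring).
rewrite !Cn2_mul. unfold z1, z2. rewrite !Cn2_one_minus.
assert (HM : 0 < INR M) by (apply lt_0_INR; lia).
assert (Cn2 (sM M) = / INR M).
{ unfold Cn2, sM; cbn [fst snd].
  replace (/ INR M) with (/ sqrt (INR M) * / sqrt (INR M)) by (rewrite <- Rinv_mult, sqrt_sqrt; lra).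
  ring. }
rewrite H0. unfold Cn2; simpl. field. lra. Qed.

Lemma wv_norm : (3 * m <= M)%nat ->
  fst (cinner M (wv m th th1 th2) (wv m th th1 th2)) = INR m * (2 + Cn2 (Cadd (z1 m th th1) (z2 m th th2))).
Proof. intros H. rewrite cinner_fst.
set (w := wv m th th1 th2).
rewrite (rsum_ext _ (fun j => Cn2 (w j))) by (intros; unfold Cn2; ring).
replace (rsum (fun j => Cn2 (w j)) M) with (rsum (fun j => Cn2 (w j)) (m + (m + (m + (M - 3 * m))))) by (f_equal; lia).
rewrite !rsum_app. cbv beta.
rewrite (rsum_ext _ (fun _ => Cn2 (g0 m th th1 th2))).
2:{ intros k Hk. unfold w, wv. replace (k <? m)%nat with true by (symmetry; apply Nat.ltb_lt; lia).
    rewrite Cn2_mul, Cn2_conj, Cn2_cexp. ring. }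
rewrite (rsum_ext (fun k => Cn2 (w (m + k)%nat)) (fun _ => Cn2 (g1 m th th1 th2))).
2:{ intros k Hk. unfold w, wv.
    replace ((m + k) <? m)%nat with false by (symmetry; apply Nat.ltb_ge; lia).
    replace ((m + k) <? 2 * m)%nat with true by (symmetry; apply Nat.ltb_lt; lia).
    rewrite Cn2_mul, Cn2_conj, Cn2_cexp. ring. }
rewrite (rsum_ext (fun k => Cn2 (w (m + (m + k))%nat)) (fun _ => Cn2 g2)).
2:{ intros k Hk. unfold w, wv.
    replace ((m + (m + k)) <? m)%nat with false by (symmetry; apply Nat.ltb_ge; lia).
    replace ((m + (m + k)) <? 2 * m)%nat with false by (symmetry; apply Nat.ltb_ge; lia).
    replace ((m + (m + k)) <? 3 * m)%nat with true by (symmetry; apply Nat.ltb_lt; lia).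
    rewrite Cn2_mul, Cn2_conj, Cn2_cexp. ring. }
rewrite (rsum_ext (fun k => Cn2 (w (m + (m + (m + k)))%nat)) (fun _ => 0)).
2:{ intros k Hk. unfold w, wv.
    replace ((m + (m + (m + k))) <? m)%nat with false by (symmetry; apply Nat.ltb_ge; lia).
    replace ((m + (m + (m + k))) <? 2 * m)%nat with false by (symmetry; apply Nat.ltb_ge; lia).
    replace ((m + (m + (m + k))) <? 3 * m)%nat with false by (symmetry; apply Nat.ltb_ge; lia).
    unfold Cn2, C0; simpl; ring. }
rewrite !rsum_const.
unfold g0, g1, g2. rewrite Cn2_mul. unfold z1, z2. rewrite !Cn2_cexp.
rewrite Cn2_opp. replace (Cn2 cone) with 1 by (unfold Cn2, cone; simpl; ring). ring.
Qed.

Lemma Cn2_sum_z : Cn2 (Cadd (z1 m th th1) (z2 m th th2)) <= 4.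
Proof. unfold z1, z2, Cn2, Cadd, cexp; simpl.
set (a := INR m * (th1 - th)). set (b := INR m * (th2 - th)).
pose proof (sin2_cos2 a). pose proof (sin2_cos2 b). unfold Rsqr in *.
assert (0 <= (cos a - cos b) ^ 2 + (sin a - sin b) ^ 2) by (apply Rplus_le_le_0_compat; apply pow2_ge_0).
replace ((cos a + cos b) ^ 2 + (sin a + sin b) ^ 2) with
  (2 * (sin a * sin a + cos a * cos a) + 2 * (sin b * sin b + cos b * cos b) - ((cos a - cos b) ^ 2 + (sin a - sin b) ^ 2)) by ring.
lra. Qed.

Lemma eta_lower e : (1 <= m)%nat -> (3 * m <= M)%nat -> eta_rel M th1 th2 th e ->
  INR m / INR M * (2 - 2 * cos (INR m * (th1 - th))) * (2 - 2 * cos (INR m * (th2 - th))) <= 6 * e.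
Proof.
intros Hm H3 He.
assert (HM1 : (1 <= M)%nat) by lia.
assert (Hmr : 0 < INR m) by (apply lt_0_INR; lia).
pose proof (wv_norm H3) as Nw. pose proof Cn2_sum_z as Hz.
assert (Hz0 : 0 <= Cn2 (Cadd (z1 m th th1) (z2 m th th2))) by (unfold Cn2; nra).
pose proof (eta_test M th1 th2 th e (wv m th th1 th2) He (wv_perp1 H3) (wv_perp2 H3)) as T.
rewrite Nw in T. specialize (T ltac:(nra)).
fold (Cn2 (cinner M (wv m th th1 th2) (steer M th))) in T.
rewrite wv_v in T by auto.
pose proof (eta_nonneg _ _ _ _ _ He) as E0.
assert (INR m * (INR m / INR M * (2 - 2 * cos (INR m * (th1 - th))) * (2 - 2 * cos (INR m * (th2 - th)))) <= INR m * (6 * e)).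
{ replace (INR m * (INR m / INR M * (2 - 2 * cos (INR m * (th1 - th))) * (2 - 2 * cos (INR m * (th2 - th)))))
   with (INR m ^ 2 / INR M * (2 - 2 * cos (INR m * (th1 - th))) * (2 - 2 * cos (INR m * (th2 - th)))) by (unfold Rdiv; ring).
  assert (INR m * (2 + Cn2 (Cadd (z1 m th th1) (z2 m th th2))) * e <= INR m * (6 * e)).
  { rewrite Rmult_assoc. apply Rmult_le_compat_l. lra. nra. }
  lra. }
apply Rmult_le_reg_l in H; auto.
Qed.
End Test2.


Lemma sin_shift_pi x j : Rabs (sin (x + IZR j * PI)) = Rabs (sin x).
Proof.
assert (S0 : sin (IZR j * PI) = 0) by (apply sin_eq_0_1; exists j; reflexivity).
pose proof (sin2_cos2 (IZR j * PI)) as SC. rewrite S0 in SC. unfold Rsqr in SC.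
rewrite sin_plus, S0. replace (sin x * cos (IZR j * PI) + cos x * 0) with (sin x * cos (IZR j * PI)) by ring.
rewrite Rabs_mult. replace (Rabs (cos (IZR j * PI))) with 1. ring.
assert (cos (IZR j * PI) = 1 \/ cos (IZR j * PI) = -1) by nra.
destruct H as [-> | ->]; [rewrite Rabs_R1; reflexivity | rewrite Rabs_left by lra; lra].
Qed.

Lemma sin_half_lb d : 0 <= d -> d <= PI -> d / 6 <= sin (d / 2).
Proof. intros H0 H1. pose proof PI_4.
pose proof (sin_lb3 (d / 2) ltac:(lra) ltac:(lra)).
assert ((d/2)^3 <= (d/2) * 4) by (assert ((d/2)^2 <= 4) by nra; nra). lra. Qed.

Lemma sin_dist x y : dist2pi x y / 6 <= Rabs (sin ((x - y) / 2)).
Proof.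
unfold dist2pi. cbv zeta.
set (t := x - y). set (j := Int_part (t / (2 * PI))).
set (r := t - 2 * PI * IZR j).
pose proof PI_RGT_0 as HP.
destruct (base_Int_part (t / (2 * PI))) as [B1 B2]. fold j in B1, B2.
assert (Hr0 : 0 <= r).
{ unfold r. assert (IZR j * (2 * PI) <= t).
  { apply (Rmult_le_reg_r (/ (2 * PI))). apply Rinv_0_lt_compat; lra.
    replace (IZR j * (2 * PI) * / (2 * PI)) with (IZR j) by (field; lra). exact B1. }
  lra. }
assert (Hr1 : r < 2 * PI).
{ unfold r. assert (t < (IZR j + 1) * (2 * PI)).
  { apply (Rmult_lt_reg_r (/ (2 * PI))). apply Rinv_0_lt_compat; lra.
    replace ((IZR j + 1) * (2 * PI) * / (2 * PI)) with (IZR j + 1) by (field; lra).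
    unfold Rdiv in B2. lra. }
  lra. }
replace (t / 2) with (r / 2 + IZR j * PI) by (unfold r; field).
rewrite sin_shift_pi.
assert (Hs : 0 <= sin (r / 2)) by (apply sin_ge_0; lra).
rewrite Rabs_right by lra.
unfold Rmin. destruct (Rle_dec r (2 * PI - r)).
- apply sin_half_lb; lra.
- replace (sin (r / 2)) with (sin ((2 * PI - r) / 2)).
  apply sin_half_lb; lra.
  replace ((2 * PI - r) / 2) with (PI - r / 2) by field. apply sin_PI_x.
Qed.

Lemma Dk_small M t X : (1 <= M)%nat -> 0 < X -> X <= INR M * Rabs (sin (t / 2)) ->
  Rabs (Dk M t) <= / X.
Proof. intros HM HX H.
pose proof (Dk_closed M t) as HC.
assert (HM0 : 0 < INR M) by (apply lt_0_INR; lia).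
assert (Hb : Rabs (INR M * sin (t / 2) * Dk M t) <= 1) by (rewrite HC; apply Rabs_le, SIN_bound).
rewrite !Rabs_mult, (Rabs_right (INR M)) in Hb by lra.
apply (Rmult_le_reg_l X); auto. rewrite Rinv_r by lra.
pose proof (Rabs_pos (Dk M t)). nra. Qed.

Lemma eta_close M t1 t2 th e a b s d m : (1 <= M)%nat -> eta_rel M t1 t2 th e ->
  Rabs a <= 1 -> Rabs b <= 1 -> Rabs s <= 1 -> 0 < m -> m <= 1 - s ^ 2 ->
  Rabs (Dk M (th - t1) - a) <= d -> Rabs (Dk M (th - t2) - b) <= d ->
  Rabs (Dk M (t2 - t1) - s) <= d -> d <= m / 4 ->
  Rabs (e - (1 - F a b s)) <= 36 * d / m ^ 2.
Proof.
intros HM He Ha Hb Hs Hm Hms H1 H2 H3 Hd.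
pose proof (eta_formula M t1 t2 th e HM He) as EF.
destruct (FL a b s (Dk M (th - t1)) (Dk M (th - t2)) (Dk M (t2 - t1)) d m Ha Hb Hs
  (Dk_bound _ _ HM) (Dk_bound _ _ HM) (Dk_bound _ _ HM) Hm Hms H1 H2 H3 Hd) as [Hp Hf].
assert (E : e = 1 - F (Dk M (th - t1)) (Dk M (th - t2)) (Dk M (t2 - t1))).
{ unfold F. rewrite <- EF. field. lra. }
rewrite E. replace (1 - F (Dk M (th - t1)) (Dk M (th - t2)) (Dk M (t2 - t1)) - (1 - F a b s))
  with (- (F (Dk M (th - t1)) (Dk M (th - t2)) (Dk M (t2 - t1)) - F a b s)) by ring.
rewrite Rabs_Ropp. exact Hf. Qed.

Lemma cos_lt_1 u : 0 < Rabs u -> Rabs u < 2 * PI -> cos u < 1.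
Proof. intros H1 H2.
replace u with (2 * (u / 2)) by field. rewrite cos_2a_sin.
assert (sin (u / 2) <> 0).
{ destruct (Rle_or_lt 0 u).
  - rewrite Rabs_right in * by lra. apply Rgt_not_eq, sin_gt_0; lra.
  - rewrite Rabs_left in * by lra. replace (u / 2) with (- (- u / 2)) by field.
    rewrite sin_neg. apply Ropp_neq_0_compat. apply Rgt_not_eq, sin_gt_0; lra. }
assert (0 < sin (u / 2) * sin (u / 2)) by (apply Rsqr_pos_lt; auto). lra. Qed.

Lemma lim_le (a b : nat -> R) A B : Un_cv a A -> Un_cv b B ->
  (exists N0, forall N, (N0 <= N)%nat -> b N <= a N) -> B <= A.
Proof. intros Ha Hb [N0 H].
destruct (Rle_or_lt B A) as [|Hlt]; auto. exfalso.
destruct (Ha ((B - A) / 2) ltac:(lra)) as [N1 H1].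
destruct (Hb ((B - A) / 2) ltac:(lra)) as [N2 H2].
set (N := max N0 (max N1 N2)).
specialize (H N ltac:(unfold N; lia)). specialize (H1 N ltac:(unfold N; lia)).
specialize (H2 N ltac:(unfold N; lia)). unfold Rdist in *.
apply Rabs_def2 in H1. apply Rabs_def2 in H2. lra. Qed.


Lemma cv_le (x : nat -> R) l : (forall eps, 0 < eps -> exists N0, forall N, (N0 <= N)%nat ->
  Rabs (x N - l) <= eps) -> Un_cv x l.
Proof. intros H eps He. destruct (H (eps / 2) ltac:(lra)) as [N0 HN]. exists N0.
intros n Hn. unfold Rdist. specialize (HN n Hn). lra. Qed.

Lemma cv_const a : Un_cv (fun _ => a) a.
Proof. intros eps He. exists O. intros. unfold Rdist. rewrite Rminus_diag, Rabs_R0. lra. Qed.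

Section Main.
Variables (c : R) (hc : 0 < c) (Mf : nat -> nat) (hM2 : forall N, (2 <= Mf N)%nat)
  (hMc : Un_cv (fun N => INR (Mf N) / INR N) c)
  (alpha : R) (halpha : 0 < alpha) (th1 : nat -> R) (eta : nat -> R -> R)
  (heta : forall N theta,
      eta_rel (Mf N) (th1 N) (th1 N + alpha / INR N) theta (eta N theta)).

Definition s0 := sinc (alpha * c / 2).
Definition m0 := 1 - s0 ^ 2.

Lemma m0_pos : 0 < m0.
Proof. unfold m0, s0. assert (H : Rabs (sinc (alpha * c / 2)) < 1).
{ apply sinc_lt1. nra. }
pose proof (Rabs_pos (sinc (alpha * c / 2))).
replace (sinc (alpha * c / 2) ^ 2) with (Rabs (sinc (alpha * c / 2)) ^ 2)
  by (unfold Rabs; destruct (Rcase_abs (sinc (alpha * c / 2))); ring).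
nra. Qed.

Lemma HM1 N : (1 <= Mf N)%nat.
Proof. specialize (hM2 N); lia. Qed.

Lemma unifR R eps : 0 <= R -> 0 < eps -> exists N0, forall N, (N0 <= N)%nat ->
  forall beta, Rabs beta <= R ->
  Rabs (eta N (th1 N + beta / INR N) - (1 - kappa c alpha beta)) <= eps.
Proof.
intros HR He. pose proof m0_pos as Hm.
set (d := Rmin (m0 / 4) (eps * m0 ^ 2 / 36)).
assert (Hd0 : 0 < d).
{ unfold d. apply Rmin_pos. lra. apply Rmult_lt_0_compat; [apply Rmult_lt_0_compat; [lra | apply pow_lt; lra] | lra]. }
assert (Hd1 : d <= m0 / 4) by apply Rmin_l.
assert (Hd2 : d <= eps * m0 ^ 2 / 36) by apply Rmin_r.
destruct (UL c Mf hM2 hMc (R + alpha) d ltac:(lra) Hd0) as [N0 HN0].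
exists N0. intros N HN beta Hb.
assert (E : kappa c alpha beta = F (sinc (beta * c / 2)) (sinc ((beta - alpha) * c / 2)) s0) by reflexivity.
rewrite E.
eapply Rle_trans.
- apply (eta_close (Mf N) (th1 N) (th1 N + alpha / INR N) (th1 N + beta / INR N) _
     _ _ s0 d m0 (HM1 N) (heta N _) (sinc_bound _) (sinc_bound _) (sinc_bound _) Hm ltac:(unfold m0; lra)).
  + replace (th1 N + beta / INR N - th1 N) with (beta / INR N) by ring.
    apply HN0; auto. lra.
  + replace (th1 N + beta / INR N - (th1 N + alpha / INR N)) with ((beta - alpha) / INR N)
      by (unfold Rdiv; ring).
    apply HN0; auto. eapply Rle_trans; [apply Rabs_triang|]. rewrite Rabs_Ropp, (Rabs_right alpha) by lra. lra.
  + replace (th1 N + alpha / INR N - th1 N) with (alpha / INR N) by ring.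
    apply HN0; auto. rewrite Rabs_right by lra. lra.
  + exact Hd1.
- assert (Hm2 : 0 < m0 ^ 2) by (apply pow_lt; lra).
  apply Rle_trans with (36 * (eps * m0 ^ 2 / 36) / m0 ^ 2).
  { unfold Rdiv. apply Rmult_le_compat_r; [left; apply Rinv_0_lt_compat; lra | lra]. }
  right; field; lra.
Qed.

Lemma part2 : forall K : R -> Prop, compact K ->
  forall eps, 0 < eps -> exists N0, forall N, (N0 <= N)%nat ->
    forall beta, K beta ->
      Rabs (eta N (th1 N + beta / INR N) - (1 - kappa c alpha beta)) <= eps.
Proof.
intros K HK eps He. destruct (compact_P1 K HK) as [lo [hi Hb]].
destruct (unifR (Rabs lo + Rabs hi) eps ltac:(pose proof (Rabs_pos lo); pose proof (Rabs_pos hi); lra) He)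
  as [N0 HN0].
exists N0. intros N HN beta Kb. apply HN0; auto.
destruct (Hb beta Kb). apply Rabs_le.
pose proof (Rabs_pos lo). pose proof (Rabs_pos hi). pose proof (Rle_abs hi).
pose proof (Rle_abs (- lo)). rewrite Rabs_Ropp in *. lra.
Qed.

Lemma pointwise beta : Un_cv (fun N => eta N (th1 N + beta / INR N)) (1 - kappa c alpha beta).
Proof. apply cv_le. intros eps He.
destruct (unifR (Rabs beta) eps (Rabs_pos _) He) as [N0 HN0]. exists N0.
intros N HN. apply HN0; auto. lra. Qed.

Lemma kappa_le1 beta : kappa c alpha beta <= 1.
Proof.
assert (0 <= 1 - kappa c alpha beta); [|lra].
apply (lim_le _ (fun _ => 0) _ 0 (pointwise beta) (cv_const 0)).
exists O. intros N _. eapply eta_nonneg. apply heta.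
Qed.

Lemma part1 : forall psi : nat -> R,
  (forall N, - PI <= psi N <= PI) ->
  (forall B : R, exists N0, forall N, (N0 <= N)%nat -> B <= INR N * dist2pi (psi N) (th1 N)) ->
  Un_cv (fun N => eta N (psi N)) 1.
Proof.
intros psi _ Hdist. apply cv_le. intros eps He. pose proof m0_pos as Hm.
set (d := Rmin (m0 / 4) (eps * m0 ^ 2 / 36)).
assert (Hd0 : 0 < d).
{ unfold d. apply Rmin_pos. lra. apply Rmult_lt_0_compat; [apply Rmult_lt_0_compat; [lra | apply pow_lt; lra] | lra]. }
assert (Hd1 : d <= m0 / 4) by apply Rmin_l.
assert (Hd2 : d <= eps * m0 ^ 2 / 36) by apply Rmin_r.
destruct (UL c Mf hM2 hMc alpha d ltac:(lra) Hd0) as [N1 HN1].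
destruct (hMc (c / 2) ltac:(lra)) as [N2 HN2].
set (X := / d). assert (HX : 0 < X) by (apply Rinv_0_lt_compat; lra).
set (B := 12 * (X + 3 * c * alpha / 4) / c + 1).
destruct (Hdist B) as [N3 HN3].
exists (max 1 (max N1 (max N2 N3))). intros N HN.
specialize (HN2 N ltac:(lia)). specialize (HN3 N ltac:(lia)). unfold Rdist in HN2.
apply Rabs_def2 in HN2. destruct HN2 as [HN2a HN2b].
assert (HNr : 1 <= INR N) by (apply (le_INR 1); lia).
set (M := Mf N) in *. set (dN := dist2pi (psi N) (th1 N)) in *.
pose proof (sin_dist (psi N) (th1 N)) as S1. fold dN in S1.
set (S1v := Rabs (sin ((psi N - th1 N) / 2))) in *.
assert (HB0 : 0 <= B).
{ unfold B. assert (0 <= 12 * (X + 3 * c * alpha / 4) / c).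
  { unfold Rdiv. apply Rmult_le_pos; [nra | left; apply Rinv_0_lt_compat; lra]. } lra. }
assert (HMS1 : X + 3 * c * alpha / 4 <= INR M * S1v).
{ assert (E1 : INR M * (dN / 6) = (INR M / INR N) * (INR N * dN) / 6) by (field; lra).
  assert (E2 : (INR M / INR N) * (INR N * dN) >= (c / 2) * B).
  { apply Rle_ge. apply Rmult_le_compat; lra. }
  assert (E3 : (c / 2) * B / 6 >= X + 3 * c * alpha / 4).
  { unfold B. replace (c / 2 * (12 * (X + 3 * c * alpha / 4) / c + 1) / 6)
      with ((X + 3 * c * alpha / 4) + c / 12) by (field; lra). lra. }
  assert (E4 : INR M * (dN / 6) <= INR M * S1v) by (apply Rmult_le_compat_l; [apply pos_INR | lra]).
  lra. }
assert (HS2 : S1v - alpha / (2 * INR N) <= Rabs (sin ((psi N - (th1 N + alpha / INR N)) / 2))).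
{ pose proof (sin_lip ((psi N - th1 N) / 2) ((psi N - (th1 N + alpha / INR N)) / 2)) as L.
  replace ((psi N - th1 N) / 2 - (psi N - (th1 N + alpha / INR N)) / 2) with (alpha / (2 * INR N)) in L
    by (field; lra).
  rewrite (Rabs_right (alpha / (2 * INR N))) in L by (apply Rle_ge; unfold Rdiv; apply Rmult_le_pos; [lra | left; apply Rinv_0_lt_compat; lra]).
  pose proof (Rabs_triang_inv (sin ((psi N - th1 N) / 2)) (sin ((psi N - (th1 N + alpha / INR N)) / 2))).
  unfold S1v. lra. }
assert (HMS2 : X <= INR M * Rabs (sin ((psi N - (th1 N + alpha / INR N)) / 2))).
{ assert (E : INR M * (alpha / (2 * INR N)) = (INR M / INR N) * alpha / 2) by (field; lra).
  assert (E' : (INR M / INR N) * alpha / 2 <= 3 * c * alpha / 4).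
  { apply (Rmult_le_reg_r 2). lra. replace ((INR M / INR N) * alpha / 2 * 2) with ((INR M / INR N) * alpha) by (field; lra).
    nra. }
  assert (INR M * (S1v - alpha / (2 * INR N)) <= INR M * Rabs (sin ((psi N - (th1 N + alpha / INR N)) / 2)))
    by (apply Rmult_le_compat_l; [apply pos_INR | lra]).
  rewrite Rmult_minus_distr_l in H. lra. }
assert (HMS1' : X <= INR M * S1v).
{ assert (0 <= 3 * c * alpha / 4) by nra. lra. }
assert (D1 : Rabs (Dk M (psi N - th1 N) - 0) <= d).
{ rewrite Rminus_0_r. replace d with (/ X) by (unfold X; rewrite Rinv_inv; reflexivity).
  apply Dk_small; auto. apply HM1. }
assert (D2 : Rabs (Dk M (psi N - (th1 N + alpha / INR N)) - 0) <= d).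
{ rewrite Rminus_0_r. replace d with (/ X) by (unfold X; rewrite Rinv_inv; reflexivity).
  apply Dk_small; auto. apply HM1. }
assert (D3 : Rabs (Dk M (th1 N + alpha / INR N - th1 N) - s0) <= d).
{ replace (th1 N + alpha / INR N - th1 N) with (alpha / INR N) by ring.
  apply HN1; [lia|]. rewrite Rabs_right by lra. lra. }
pose proof (eta_close M (th1 N) (th1 N + alpha / INR N) (psi N) (eta N (psi N)) 0 0 s0 d m0
  (HM1 N) (heta N _) ltac:(rewrite Rabs_R0; lra) ltac:(rewrite Rabs_R0; lra) (sinc_bound _) Hm
  ltac:(unfold m0; lra) D1 D2 D3 Hd1) as EC.
replace (F 0 0 s0) with 0 in EC by (unfold F; field; unfold m0 in Hm; lra).
rewrite Rminus_0_r in EC. eapply Rle_trans; [exact EC|].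
assert (Hm2 : 0 < m0 ^ 2) by (apply pow_lt; lra).
apply Rle_trans with (36 * (eps * m0 ^ 2 / 36) / m0 ^ 2).
{ unfold Rdiv. apply Rmult_le_compat_r; [left; apply Rinv_0_lt_compat; lra | lra]. }
right; field; lra.
Qed.

Lemma kappa_lt1 beta : beta <> 0 -> beta <> alpha -> kappa c alpha beta < 1.
Proof.
intros Hb0 Hba.
assert (HPI : 3 < PI) by (pose proof PI2_3_2; lra).
destruct (INR_unbounded ((Rabs beta + Rabs (alpha - beta)) * c / 6 + 3)) as [K HK].
assert (HK0 : 0 <= (Rabs beta + Rabs (alpha - beta)) * c / 6).
{ pose proof (Rabs_pos beta). pose proof (Rabs_pos (alpha - beta)).
  unfold Rdiv. apply Rmult_le_pos; [nra | lra]. }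
assert (HK3 : (3 < K)%nat) by (apply INR_lt; simpl; lra).
assert (HKr : 3 < INR K) by lra.
set (mN := fun N => (Mf N / K)%nat).
assert (Hdiv : forall N, INR K * INR (mN N) <= INR (Mf N) /\ INR (Mf N) < INR K * INR (mN N) + INR K).
{ intros N. unfold mN. pose proof (Nat.div_mod_eq (Mf N) K) as E.
  pose proof (Nat.mod_upper_bound (Mf N) K ltac:(lia)) as U.
  assert (E' : INR (Mf N) = INR K * INR (Mf N / K) + INR (Mf N mod K))
    by (rewrite <- mult_INR, <- plus_INR; f_equal; exact E).
  rewrite E'. split.
  - pose proof (pos_INR (Mf N mod K)). lra.
  - apply lt_INR in U. lra. }
set (q := fun N => INR (mN N) / INR N).
set (r := fun N => INR (mN N) / INR (Mf N)).
assert (Hq : Un_cv q (c / INR K)).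
{ apply cv_le. intros eps He.
  destruct (hMc (INR K * eps / 2) ltac:(nra)) as [N1 H1].
  destruct (INR_unbounded (2 / eps)) as [N2 H2].
  exists (max 1 (max N1 N2)). intros N HN. specialize (H1 N ltac:(lia)). unfold Rdist in H1.
  assert (HN1 : 1 <= INR N) by (apply (le_INR 1); lia).
  assert (HN2 : INR N2 <= INR N) by (apply le_INR; lia).
  destruct (Hdiv N) as [D1 D2]. unfold q.
  replace (INR (mN N) / INR N - c / INR K) with
    ((INR (mN N) * INR K - INR (Mf N)) / (INR K * INR N) + (INR (Mf N) / INR N - c) / INR K)
    by (field; lra).
  eapply Rle_trans; [apply Rabs_triang|].
  assert (A1 : Rabs ((INR (mN N) * INR K - INR (Mf N)) / (INR K * INR N)) <= eps / 2).
  { unfold Rdiv. rewrite Rabs_mult, Rabs_inv, (Rabs_right (INR K * INR N)) by nra.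
    apply (Rmult_le_reg_r (INR K * INR N)). nra. rewrite Rmult_assoc, Rinv_l by nra.
    assert (PP : 0 < eps * / 2 * (INR K * INR N)) by (repeat apply Rmult_lt_0_compat; lra).
    rewrite Rmult_1_r. apply Rabs_le. split; [|lra].
    assert (2 <= eps * INR N).
    { apply (Rmult_le_reg_r (/ eps)). apply Rinv_0_lt_compat; lra.
      replace (eps * INR N * / eps) with (INR N) by (field; lra). unfold Rdiv in H2. lra. }
    nra. }
  assert (A2 : Rabs ((INR (Mf N) / INR N - c) / INR K) <= eps / 2).
  { unfold Rdiv at 1. rewrite Rabs_mult, Rabs_inv, (Rabs_right (INR K)) by lra.
    apply (Rmult_le_reg_r (INR K)). lra. rewrite Rmult_assoc, Rinv_l by lra. lra. }
  lra. }
assert (HMbig : forall Y, exists N0, forall N, (N0 <= N)%nat -> Y <= INR (Mf N)).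
{ intros Y. destruct (hMc (c / 2) ltac:(lra)) as [N1 H1].
  destruct (INR_unbounded (2 * Rabs Y / c)) as [N2 H2].
  exists (max 1 (max N1 N2)). intros N HN. specialize (H1 N ltac:(lia)). unfold Rdist in H1.
  apply Rabs_def2 in H1.
  assert (HN1 : 1 <= INR N) by (apply (le_INR 1); lia).
  assert (HN2 : INR N2 <= INR N) by (apply le_INR; lia).
  assert (E : INR (Mf N) = (INR (Mf N) / INR N) * INR N) by (field; lra).
  assert (2 * Rabs Y <= c * INR N).
  { apply (Rmult_le_reg_r (/ c)). apply Rinv_0_lt_compat; lra.
    replace (c * INR N * / c) with (INR N) by (field; lra). unfold Rdiv in H2. lra. }
  pose proof (Rle_abs Y). nra. }
assert (Hr : Un_cv r (/ INR K)).
{ apply cv_le. intros eps He.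
  destruct (HMbig (/ eps)) as [N1 H1]. exists N1. intros N HN. specialize (H1 N HN).
  pose proof (HM1 N) as HM. assert (HMr : 1 <= INR (Mf N)) by (apply (le_INR 1); auto).
  destruct (Hdiv N) as [D1 D2]. unfold r.
  replace (INR (mN N) / INR (Mf N) - / INR K) with ((INR (mN N) * INR K - INR (Mf N)) / (INR K * INR (Mf N)))
    by (field; lra).
  unfold Rdiv. rewrite Rabs_mult, Rabs_inv, (Rabs_right (INR K * INR (Mf N))) by nra.
  apply (Rmult_le_reg_r (INR K * INR (Mf N))). nra. rewrite Rmult_assoc, Rinv_l by nra.
  assert (PP : 0 < eps * (INR K * INR (Mf N))) by (repeat apply Rmult_lt_0_compat; lra).
  rewrite Rmult_1_r. apply Rabs_le. split; [|lra].
  assert (1 <= eps * INR (Mf N)).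
  { apply (Rmult_le_reg_r (/ eps)). apply Rinv_0_lt_compat; lra.
    replace (eps * INR (Mf N) * / eps) with (INR (Mf N)) by (field; lra). lra. }
  nra. }
set (g := fun (x : R) (N : nat) => 2 - 2 * cos (q N * x)).
assert (Hg : forall x, Un_cv (g x) (2 - 2 * cos (c / INR K * x))).
{ intros x. apply CV_minus. apply cv_const. apply CV_mult. apply cv_const.
  apply (continuity_seq cos (fun N => q N * x)). apply continuity_cos.
  apply CV_mult. exact Hq. apply cv_const. }
set (b := fun N => r N * g beta N * g (alpha - beta) N).
assert (Hbcv : Un_cv b (/ INR K * (2 - 2 * cos (c / INR K * beta)) * (2 - 2 * cos (c / INR K * (alpha - beta))))).
{ apply CV_mult. apply CV_mult. exact Hr. apply Hg. apply Hg. }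
assert (Hacv : Un_cv (fun N => 6 * eta N (th1 N + beta / INR N)) (6 * (1 - kappa c alpha beta))).
{ apply CV_mult. apply cv_const. apply pointwise. }
assert (Hev : exists N0, forall N, (N0 <= N)%nat -> b N <= 6 * eta N (th1 N + beta / INR N)).
{ destruct (HMbig (INR K)) as [N1 H1]. exists N1. intros N HN. specialize (H1 N HN).
  destruct (Hdiv N) as [D1 D2].
  assert (Hm1 : (1 <= mN N)%nat).
  { destruct (mN N) eqn:E; [|lia]. simpl in D2. lra. }
  assert (Hm3 : (3 * mN N <= Mf N)%nat).
  { apply INR_le. rewrite mult_INR. simpl (INR 3). pose proof (pos_INR (mN N)). nra. }
  pose proof (eta_lower (Mf N) (mN N) (th1 N + beta / INR N) (th1 N) (th1 N + alpha / INR N)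
     (eta N (th1 N + beta / INR N)) Hm1 Hm3 (heta N _)) as EL.
  unfold b, r, g, q.
  replace (INR (mN N) * (th1 N - (th1 N + beta / INR N))) with (- (INR (mN N) / INR N * beta)) in EL
    by (unfold Rdiv; ring).
  replace (INR (mN N) * (th1 N + alpha / INR N - (th1 N + beta / INR N))) with (INR (mN N) / INR N * (alpha - beta)) in EL
    by (unfold Rdiv; ring).
  rewrite cos_neg in EL. exact EL. }
pose proof (lim_le _ _ _ _ Hacv Hbcv Hev) as LL.
assert (HKp : 0 < / INR K) by (apply Rinv_0_lt_compat; lra).
assert (Hcb : forall x, x <> 0 -> Rabs x * c / 6 < INR K -> cos (c / INR K * x) < 1).
{ intros x Hx HxK. apply cos_lt_1.
  - rewrite Rabs_mult. apply Rmult_lt_0_compat. rewrite Rabs_right. unfold Rdiv. apply Rmult_lt_0_compat; lra.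
    apply Rle_ge; unfold Rdiv; apply Rmult_le_pos; lra. apply Rabs_pos_lt; auto.
  - rewrite Rabs_mult. rewrite (Rabs_right (c / INR K)) by (apply Rle_ge; unfold Rdiv; apply Rmult_le_pos; lra).
    apply Rlt_trans with 6; [|lra].
    replace (c / INR K * Rabs x) with ((Rabs x * c / 6) * (6 / INR K)) by (field; lra).
    apply Rlt_le_trans with (INR K * (6 / INR K)).
    apply Rmult_lt_compat_r; auto. unfold Rdiv; apply Rmult_lt_0_compat; lra.
    right; field; lra. }
assert (C1 : cos (c / INR K * beta) < 1).
{ apply Hcb; auto. pose proof (Rabs_pos (alpha - beta)). pose proof (Rabs_pos beta).
  assert (Rabs beta * c / 6 <= (Rabs beta + Rabs (alpha - beta)) * c / 6).
  { unfold Rdiv. apply Rmult_le_compat_r; [lra|]. nra. } lra. }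
assert (C2 : cos (c / INR K * (alpha - beta)) < 1).
{ apply Hcb. intro E; apply Hba; lra. pose proof (Rabs_pos (alpha - beta)). pose proof (Rabs_pos beta).
  assert (Rabs (alpha - beta) * c / 6 <= (Rabs beta + Rabs (alpha - beta)) * c / 6).
  { unfold Rdiv. apply Rmult_le_compat_r; [lra|]. nra. } lra. }
assert (0 < / INR K * (2 - 2 * cos (c / INR K * beta)) * (2 - 2 * cos (c / INR K * (alpha - beta)))).
{ apply Rmult_lt_0_compat. apply Rmult_lt_0_compat; lra. lra. }
lra.
Qed.

End Main.


Theorem lemma1
  (c : R) (hc : 0 < c)
  (Mf : nat -> nat) (hM2 : forall N, (2 <= Mf N)%nat)
  (hMc : Un_cv (fun N => INR (Mf N) / INR N) c)
  (alpha : R) (halpha : 0 < alpha)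
  (th1 : nat -> R)
  (eta : nat -> R -> R)
  (heta : forall N theta,
      eta_rel (Mf N) (th1 N) (th1 N + alpha / INR N) theta (eta N theta)) :
  (forall psi : nat -> R,
      (forall N, - PI <= psi N <= PI) ->
      (forall B : R, exists N0, forall N, (N0 <= N)%nat ->
          B <= INR N * dist2pi (psi N) (th1 N)) ->
      Un_cv (fun N => eta N (psi N)) 1)
  /\
  (forall K : R -> Prop, compact K ->
      forall eps, 0 < eps -> exists N0, forall N, (N0 <= N)%nat ->
        forall beta, K beta ->
          Rabs (eta N (th1 N + beta / INR N) - (1 - kappa c alpha beta)) <= eps)
  /\
  (forall beta : R,
      kappa c alpha beta <= 1 /\
      (kappa c alpha beta = 1 <-> beta = 0 \/ beta = alpha)).
Proof.
split; [|split].
- exact (part1 c hc Mf hM2 hMc alpha halpha th1 eta heta).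
- exact (part2 c hc Mf hM2 hMc alpha halpha th1 eta heta).
- intros beta. split. exact (kappa_le1 c hc Mf hM2 hMc alpha halpha th1 eta heta beta). split.
  + intros H1. destruct (Req_EM_T beta 0) as [E|E]; [left; exact E|].
    destruct (Req_EM_T beta alpha) as [E'|E']; [right; exact E'|].
    exfalso. pose proof (kappa_lt1 c hc Mf hM2 hMc alpha halpha th1 eta heta beta E E'). lra.
  + assert (Hm : 0 < 1 - sinc (alpha * c / 2) ^ 2) by (apply (m0_pos c hc alpha halpha)).
    intros [-> | ->]; unfold kappa.
    * replace (0 * c / 2) with 0 by field. replace ((0 - alpha) * c / 2) with (- (alpha * c / 2)) by field.
      rewrite sinc_0, sinc_even. field. lra.
    * replace ((alpha - alpha) * c / 2) with 0 by field. rewrite sinc_0. field. lra.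
Qed.
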